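(* Let $\lambda>0$, $\gamma>0$, and let $\beta_1=\beta_1(\gamma)$ be the unique positive solution of $\frac{\sqrt\pi}{2}\gamma x(1+x)^{1/2}(3+x)=1$. If $0\le\beta<\beta_1$, then the problem \begin{align*} &[(1+\beta y(\eta))y'(\eta)]'+2\eta y'(\eta)=0, \quad 0<\eta<\lambda,\\ &y'(0)+\beta y(0)y'(0)-\gamma y(0)=0,\\ &y(\lambda)=1, \end{align*} has a unique non-negative analytic solution $y:[0,\lambda]\to\mathbb{R}$.
   Context: The solution is called the generalized modified error (GME) function. *)

(* Defs.v *)
From Stdlib Require Import Reals Lra.
From Coquelicot Require Import Coquelicot.
Open Scope R_scope.

(** [y] is real-analytic on the closed interval [[a,b]]: around every point
    [x] of [[a,b]] it is given by a convergent power series on some open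
    neighbourhood of [x] (for the endpoints this refers to an analytic
    extension of [y] across the endpoint; [y] is a total function R -> R). *)
Definition analytic_on (y : R -> R) (a b : R) : Prop :=
  forall x, a <= x <= b ->
    exists r : R, 0 < r /\ exists c : nat -> R,
      forall t, Rabs (t - x) < r -> is_pseries c (t - x) (y t).

Definition is_solution (lambda beta gamma : R) (y : R -> R) : Prop :=
  (forall eta, 0 < eta < lambda ->
     Derive (fun e => (1 + beta * y e) * Derive y e) eta
       + 2 * eta * Derive y eta = 0) /\
  Derive y 0 + beta * y 0 * Derive y 0 - gamma * y 0 = 0 /\
  y lambda = 1.

Definition nonneg_analytic_solution (lambda beta gamma : R) (y : R -> R) : Prop :=
  analytic_on y 0 lambda /\
  (forall eta, 0 <= eta <= lambda -> 0 <= y eta) /\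
  is_solution lambda beta gamma y.

(* Main.v *)
Require Import Defs.
From Stdlib Require Import Reals Lra Lia Arith ClassicalEpsilon.
From Coquelicot Require Import Coquelicot.
Open Scope R_scope.


Lemma CVr_ge a r : CV_disk a r -> Rbar_le r (CV_radius a).
Proof. intros H. unfold CV_radius. destruct (Lub_Rbar_correct (CV_disk a)) as [H1 _]. apply H1, H. Qed.

Lemma cont_of_deriv f x : ex_derive f x -> continuity_pt f x.
Proof. intros H. apply continuity_pt_filterlim. apply (ex_derive_continuous f x H). Qed.

Lemma mvt_open (f df : R -> R) (a b : R) : a < b ->
  (forall x, a < x < b -> is_derive f x (df x)) ->
  (forall x, a <= x <= b -> continuity_pt f x) ->
  exists c, a < c < b /\ f b - f a = df c * (b - a).
Proof.
  intros Hab Hd Hc.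
  assert (pr1 : forall c, a < c < b -> derivable_pt f c).
  { intros c Hc'. exists (df c). apply is_derive_Reals, Hd, Hc'. }
  assert (pr2 : forall c, a < c < b -> derivable_pt id c).
  { intros c _. apply derivable_pt_id. }
  destruct (MVT f id a b pr1 pr2 Hab Hc) as [c [P HP]].
  { intros; apply derivable_continuous_pt, derivable_pt_id. }
  exists c; split; [exact P|].
  assert (E1 : derive_pt f c (pr1 c P) = df c).
  { apply derive_pt_eq_0. apply is_derive_Reals, Hd, P. }
  assert (E2 : derive_pt id c (pr2 c P) = 1).
  { apply derive_pt_eq_0. apply derivable_pt_lim_id. }
  rewrite E1, E2 in HP. unfold id in HP. lra.
Qed.

Lemma nonincr_open (f df : R -> R) (a b : R) : a <= b ->
  (forall x, a < x < b -> is_derive f x (df x)) ->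
  (forall x, a < x < b -> df x <= 0) ->
  (forall x, a <= x <= b -> continuity_pt f x) ->
  f b <= f a.
Proof.
  intros Hab Hd Hs Hc. destruct (Req_dec a b) as [->|Hne]; [lra|].
  destruct (mvt_open f df a b) as [c [Hc1 Hc2]]; try lra; auto.
  assert (df c <= 0) by (apply Hs; lra). nra.
Qed.

Lemma nondecr_open (f df : R -> R) (a b : R) : a <= b ->
  (forall x, a < x < b -> is_derive f x (df x)) ->
  (forall x, a < x < b -> 0 <= df x) ->
  (forall x, a <= x <= b -> continuity_pt f x) ->
  f a <= f b.
Proof.
  intros Hab Hd Hs Hc. destruct (Req_dec a b) as [->|Hne]; [lra|].
  destruct (mvt_open f df a b) as [c [Hc1 Hc2]]; try lra; auto.
  assert (0 <= df c) by (apply Hs; lra). nra.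
Qed.

Lemma gronwall_fwd (e de : R -> R) (K a b : R) : a <= b ->
  (forall x, a < x < b -> is_derive e x (de x)) ->
  (forall x, a < x < b -> de x <= K * e x) ->
  (forall x, a <= x <= b -> continuity_pt e x) ->
  forall t, a <= t <= b -> e t <= e a * exp (K * (t - a)).
Proof.
  intros Hab Hd Hs Hc t Ht.
  set (phi := fun x => e x * exp (- K * (x - a))).
  assert (H : phi t <= phi a).
  { apply (nonincr_open phi (fun x => de x * exp (- K * (x - a)) + e x * (- K * exp (- K * (x - a))))); try lra.
    - intros x Hx. unfold phi. apply (is_derive_mult e (fun x => exp (- K * (x - a)))).
      + apply Hd; lra.
      + auto_derive; auto. unfold Rminus; ring.
      + intros; simpl; apply Rmult_comm.
    - intros x Hx. assert (de x <= K * e x) by (apply Hs; lra).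
      assert (0 < exp (- K * (x - a))) by apply exp_pos. nra.
    - intros x Hx. unfold phi. apply continuity_pt_mult.
      + apply Hc; lra.
      + apply cont_of_deriv; auto_derive; auto. }
  unfold phi in H. replace (a - a) with 0 in H by ring. rewrite Rmult_0_r, exp_0, Rmult_1_r in H.
  assert (Hp : 0 < exp (K * (t - a))) by apply exp_pos.
  replace (e t) with (e t * exp (- K * (t - a)) * exp (K * (t - a))).
  - apply Rmult_le_compat_r; lra.
  - rewrite Rmult_assoc, <- exp_plus. replace (- K * (t - a) + K * (t - a)) with 0 by ring.
    rewrite exp_0; ring.
Qed.

Lemma gronwall_bwd (e de : R -> R) (K a b : R) : a <= b ->
  (forall x, a < x < b -> is_derive e x (de x)) ->
  (forall x, a < x < b -> - (K * e x) <= de x) ->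
  (forall x, a <= x <= b -> continuity_pt e x) ->
  forall t, a <= t <= b -> e t <= e b * exp (K * (b - t)).
Proof.
  intros Hab Hd Hs Hc t Ht.
  set (phi := fun x => e x * exp (K * (x - b))).
  assert (H : phi t <= phi b).
  { apply (nondecr_open phi (fun x => de x * exp (K * (x - b)) + e x * (K * exp (K * (x - b))))); try lra.
    - intros x Hx. unfold phi. apply (is_derive_mult e (fun x => exp (K * (x - b)))).
      + apply Hd; lra.
      + auto_derive; auto. unfold Rminus; ring.
      + intros; simpl; apply Rmult_comm.
    - intros x Hx. assert (- (K * e x) <= de x) by (apply Hs; lra).
      assert (0 < exp (K * (x - b))) by apply exp_pos. nra.
    - intros x Hx. unfold phi. apply continuity_pt_mult.
      + apply Hc; lra.
      + apply cont_of_deriv; auto_derive; auto. }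
  unfold phi in H. replace (b - b) with 0 in H by ring. rewrite Rmult_0_r, exp_0, Rmult_1_r in H.
  assert (Hp : 0 < exp (K * (b - t))) by apply exp_pos.
  replace (e t) with (e t * exp (K * (t - b)) * exp (K * (b - t))).
  - apply Rmult_le_compat_r; lra.
  - rewrite Rmult_assoc, <- exp_plus. replace (K * (t - b) + K * (b - t)) with 0 by ring.
    rewrite exp_0; ring.
Qed.


Lemma dplus (f g : R -> R) (x a b : R) : is_derive f x a -> is_derive g x b -> is_derive (fun t => f t + g t) x (a + b).
Proof. intros; apply (is_derive_plus f g x a b); auto. Qed.
Lemma dminus (f g : R -> R) (x a b : R) : is_derive f x a -> is_derive g x b -> is_derive (fun t => f t - g t) x (a - b).
Proof. intros; apply (is_derive_minus f g x a b); auto. Qed.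
Lemma dmult (f g : R -> R) (x a b : R) : is_derive f x a -> is_derive g x b -> is_derive (fun t => f t * g t) x (a * g x + f x * b).
Proof. intros; apply (is_derive_mult f g x a b); auto. intros; apply Rmult_comm. Qed.
Lemma dscal (c : R) (f : R -> R) (x a : R) : is_derive f x a -> is_derive (fun t => c * f t) x (c * a).
Proof. intros; apply (is_derive_scal f x c a); auto. Qed.
Lemma dconst (c x : R) : is_derive (fun _ => c) x 0.
Proof. apply (is_derive_const c x). Qed.
Lemma did (x : R) : is_derive (fun t => t) x 1.
Proof. apply (is_derive_id x). Qed.
Lemma dext (f g : R -> R) (x a : R) : (forall t, f t = g t) -> is_derive f x a -> is_derive g x a.
Proof. intros H D. apply (is_derive_ext f g x a H D). Qed.
Lemma dval (f : R -> R) (x a b : R) : a = b -> is_derive f x a -> is_derive f x b.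
Proof. intros ->; auto. Qed.

Lemma tb c x y e : x*x <= e -> y*y <= e -> Rabs (c*x*y) <= Rabs c * e.
Proof.
  intros Hx Hy. rewrite !Rabs_mult, Rmult_assoc. apply Rmult_le_compat_l. apply Rabs_pos.
  assert (Rabs x * Rabs x <= e) by (rewrite <- Rabs_mult; rewrite Rabs_right; nra).
  assert (Rabs y * Rabs y <= e) by (rewrite <- Rabs_mult; rewrite Rabs_right; nra).
  pose proof (Rabs_pos x); pose proof (Rabs_pos y). nra.
Qed.

Section Sys.
Variable beta : R.
Hypothesis Hb : 0 <= beta.

Record state := St { sy : R -> R; sq : R -> R; sr : R -> R; sm : R -> R }.

Definition solves (S : state) (a b : R) :=
  forall t, a < t < b ->
    is_derive (sy S) t (sr S t) /\
    is_derive (sq S) t (- beta * sq S t * sm S t) /\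
    is_derive (sr S) t (- beta * sm S t * sr S t - 2 * t * sm S t) /\
    is_derive (sm S) t (- 2 * beta * sm S t * sm S t - 2 * t * sq S t * sm S t).

Definition ccont (S : state) (a b : R) :=
  forall t, a <= t <= b ->
    continuity_pt (sy S) t /\ continuity_pt (sq S) t /\ continuity_pt (sr S) t /\ continuity_pt (sm S) t.

Definition bnd (S : state) (a b B : R) :=
  forall t, a <= t <= b ->
    Rabs (sy S t) <= B /\ Rabs (sq S t) <= B /\ Rabs (sr S t) <= B /\ Rabs (sm S t) <= B.

Definition dist2 (S1 S2 : state) (t : R) :=
  (sy S1 t - sy S2 t) * (sy S1 t - sy S2 t) + (sq S1 t - sq S2 t) * (sq S1 t - sq S2 t)
  + (sr S1 t - sr S2 t) * (sr S1 t - sr S2 t) + (sm S1 t - sm S2 t) * (sm S1 t - sm S2 t).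

Definition Kc (B : R) := 2 * (1 + 8 * beta * B + 2 * B + 4 * B * B).

Lemma alg_bound (B t y1 q1 r1 m1 y2 q2 r2 m2 : R) : 0 <= B -> Rabs t <= B ->
  Rabs q1 <= B -> Rabs r1 <= B -> Rabs m1 <= B ->
  Rabs q2 <= B -> Rabs r2 <= B -> Rabs m2 <= B ->
  let dy := y1 - y2 in let dq := q1 - q2 in let dr := r1 - r2 in let dm := m1 - m2 in
  let e := dy*dy + dq*dq + dr*dr + dm*dm in
  let de := 2 * dy * (r1 - r2) + 2 * dq * ((- beta * q1 * m1) - (- beta * q2 * m2))
     + 2 * dr * ((- beta * m1 * r1 - 2 * t * m1) - (- beta * m2 * r2 - 2 * t * m2))
     + 2 * dm * ((- 2 * beta * m1 * m1 - 2 * t * q1 * m1) - (- 2 * beta * m2 * m2 - 2 * t * q2 * m2)) in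
  Rabs de <= Kc B * e.
Proof.
  intros HB Ht Hq1 Hr1 Hm1 Hq2 Hr2 Hm2 dy dq dr dm e de.
  assert (Ey : dy*dy <= e) by (unfold e; nra).
  assert (Eq : dq*dq <= e) by (unfold e; nra).
  assert (Er : dr*dr <= e) by (unfold e; nra).
  assert (Em : dm*dm <= e) by (unfold e; nra).
  assert (Ee : de = 2 * (1*dy*dr + (-beta*q1)*dq*dm + (-beta*m2)*dq*dq + (-beta*m1)*dr*dr
     + (-beta*r2)*dr*dm + (-2*t)*dr*dm + (-2*beta*(m1+m2))*dm*dm + (-2*t*q1)*dm*dm + (-2*t*m2)*dm*dq)).
  { unfold de, dy, dq, dr, dm. ring. }
  rewrite Ee.
  pose proof (tb 1 dy dr e Ey Er) as T1.
  pose proof (tb (-beta*q1) dq dm e Eq Em) as T2.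
  pose proof (tb (-beta*m2) dq dq e Eq Eq) as T3.
  pose proof (tb (-beta*m1) dr dr e Er Er) as T4.
  pose proof (tb (-beta*r2) dr dm e Er Em) as T5.
  pose proof (tb (-2*t) dr dm e Er Em) as T6.
  pose proof (tb (-2*beta*(m1+m2)) dm dm e Em Em) as T7.
  pose proof (tb (-2*t*q1) dm dm e Em Em) as T8.
  pose proof (tb (-2*t*m2) dm dq e Em Eq) as T9.
  assert (He : 0 <= e) by (unfold e; nra).
  assert (C1 : Rabs 1 <= 1) by (rewrite Rabs_R1; lra).
  assert (C2 : Rabs (-beta*q1) <= beta * B) by (rewrite Rabs_mult, Rabs_Ropp, (Rabs_right beta); nra).
  assert (C3 : Rabs (-beta*m2) <= beta * B) by (rewrite Rabs_mult, Rabs_Ropp, (Rabs_right beta); nra).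
  assert (C4 : Rabs (-beta*m1) <= beta * B) by (rewrite Rabs_mult, Rabs_Ropp, (Rabs_right beta); nra).
  assert (C5 : Rabs (-beta*r2) <= beta * B) by (rewrite Rabs_mult, Rabs_Ropp, (Rabs_right beta); nra).
  assert (C6 : Rabs (-2*t) <= 2 * B) by (replace (-2*t) with (-(2*t)) by ring; rewrite Rabs_Ropp, Rabs_mult, (Rabs_right 2); lra).
  assert (C7 : Rabs (-2*beta*(m1+m2)) <= 4 * beta * B).
  { replace (-2*beta*(m1+m2)) with (-(2*beta*(m1+m2))) by ring.
    rewrite Rabs_Ropp, !Rabs_mult, (Rabs_right 2), (Rabs_right beta); try lra.
    pose proof (Rabs_triang m1 m2). nra. }
  assert (C8 : Rabs (-2*t*q1) <= 2 * B * B).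
  { replace (-2*t*q1) with (-(2*t*q1)) by ring.
    rewrite Rabs_Ropp, !Rabs_mult, (Rabs_right 2); try lra. pose proof (Rabs_pos t); pose proof (Rabs_pos q1). nra. }
  assert (C9 : Rabs (-2*t*m2) <= 2 * B * B).
  { replace (-2*t*m2) with (-(2*t*m2)) by ring.
    rewrite Rabs_Ropp, !Rabs_mult, (Rabs_right 2); try lra. pose proof (Rabs_pos t); pose proof (Rabs_pos m2). nra. }
  rewrite Rabs_mult, (Rabs_right 2) by lra.
  set (u1 := 1*dy*dr) in *. set (u2 := (-beta*q1)*dq*dm) in *. set (u3 := (-beta*m2)*dq*dq) in *.
  set (u4 := (-beta*m1)*dr*dr) in *. set (u5 := (-beta*r2)*dr*dm) in *. set (u6 := (-2*t)*dr*dm) in *.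
  set (u7 := (-2*beta*(m1+m2))*dm*dm) in *. set (u8 := (-2*t*q1)*dm*dm) in *. set (u9 := (-2*t*m2)*dm*dq) in *.
  pose proof (Rabs_triang (u1+u2+u3+u4+u5+u6+u7+u8) u9).
  pose proof (Rabs_triang (u1+u2+u3+u4+u5+u6+u7) u8).
  pose proof (Rabs_triang (u1+u2+u3+u4+u5+u6) u7).
  pose proof (Rabs_triang (u1+u2+u3+u4+u5) u6).
  pose proof (Rabs_triang (u1+u2+u3+u4) u5).
  pose proof (Rabs_triang (u1+u2+u3) u4).
  pose proof (Rabs_triang (u1+u2) u3).
  pose proof (Rabs_triang u1 u2).
  assert (Rabs 1 * e + beta*B*e*4 + 2*B*e + 4*beta*B*e + 2*B*B*e*2 <= Kc B * e / 2).
  { unfold Kc. nra. }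
  nra.
Qed.
End Sys.


Lemma cont_bound (f : R -> R) a b : a <= b -> (forall t, a <= t <= b -> continuity_pt f t) ->
  exists B, 0 <= B /\ forall t, a <= t <= b -> Rabs (f t) <= B.
Proof.
  intros Hab Hc. destruct (continuity_ab_maj (fun t => Rabs (f t)) a b Hab) as [M [HM _]].
  { intros c Hc'. apply (continuity_pt_comp f Rabs). apply Hc; auto. apply Rcontinuity_abs. }
  exists (Rabs (f M)). split; [apply Rabs_pos| auto].
Qed.

Section Sys2.
Variable beta : R.
Hypothesis Hb : 0 <= beta.

Lemma dist2_deriv (S1 S2 : state) a b t : solves beta S1 a b -> solves beta S2 a b -> a < t < b ->
  is_derive (dist2 S1 S2) t
   (2 * (sy S1 t - sy S2 t) * (sr S1 t - sr S2 t)
    + 2 * (sq S1 t - sq S2 t) * ((- beta * sq S1 t * sm S1 t) - (- beta * sq S2 t * sm S2 t))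
    + 2 * (sr S1 t - sr S2 t) * ((- beta * sm S1 t * sr S1 t - 2 * t * sm S1 t) - (- beta * sm S2 t * sr S2 t - 2 * t * sm S2 t))
    + 2 * (sm S1 t - sm S2 t) * ((- 2 * beta * sm S1 t * sm S1 t - 2 * t * sq S1 t * sm S1 t)
         - (- 2 * beta * sm S2 t * sm S2 t - 2 * t * sq S2 t * sm S2 t))).
Proof.
  intros H1 H2 Ht. destruct (H1 t Ht) as [Y1 [Q1 [R1 M1]]]. destruct (H2 t Ht) as [Y2 [Q2 [R2 M2]]].
  assert (sq_d : forall (f g : R -> R) f' g', is_derive f t f' -> is_derive g t g' ->
     is_derive (fun x => (f x - g x) * (f x - g x)) t (2 * (f t - g t) * (f' - g'))).
  { intros f g fp gp Hf Hg. eapply dval; [| apply dmult; apply dminus; eauto]. cbv beta. ring. }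
  unfold dist2.
  eapply dval; [| apply dplus; [apply dplus; [apply dplus|]|]; apply sq_d; eauto].
  cbv beta. ring.
Qed.

Lemma cplus (f g : R -> R) x : continuity_pt f x -> continuity_pt g x -> continuity_pt (fun t => f t + g t) x.
Proof. intros; apply continuity_pt_plus; auto. Qed.
Lemma cminus (f g : R -> R) x : continuity_pt f x -> continuity_pt g x -> continuity_pt (fun t => f t - g t) x.
Proof. intros; apply continuity_pt_minus; auto. Qed.
Lemma cmult (f g : R -> R) x : continuity_pt f x -> continuity_pt g x -> continuity_pt (fun t => f t * g t) x.
Proof. intros; apply continuity_pt_mult; auto. Qed.

Lemma dist2_cont (S1 S2 : state) a b t : ccont S1 a b -> ccont S2 a b -> a <= t <= b ->
  continuity_pt (dist2 S1 S2) t.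
Proof.
  intros C1 C2 Ht. destruct (C1 t Ht) as [Y1 [Q1 [R1 M1]]]. destruct (C2 t Ht) as [Y2 [Q2 [R2 M2]]].
  unfold dist2. repeat apply cplus; apply cmult; apply cminus; auto.
Qed.

Lemma dep (S1 S2 : state) a b B : a <= b -> 0 <= B ->
  solves beta S1 a b -> solves beta S2 a b -> ccont S1 a b -> ccont S2 a b ->
  bnd S1 a b B -> bnd S2 a b B -> (forall t, a <= t <= b -> Rabs t <= B) ->
  forall t, a <= t <= b ->
    dist2 S1 S2 t <= dist2 S1 S2 a * exp (Kc beta B * (t - a)) /\
    dist2 S1 S2 t <= dist2 S1 S2 b * exp (Kc beta B * (b - t)).
Proof.
  intros Hab HB H1 H2 C1 C2 B1 B2 Bt t Ht.
  set (de := fun t => 2 * (sy S1 t - sy S2 t) * (sr S1 t - sr S2 t)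
    + 2 * (sq S1 t - sq S2 t) * ((- beta * sq S1 t * sm S1 t) - (- beta * sq S2 t * sm S2 t))
    + 2 * (sr S1 t - sr S2 t) * ((- beta * sm S1 t * sr S1 t - 2 * t * sm S1 t) - (- beta * sm S2 t * sr S2 t - 2 * t * sm S2 t))
    + 2 * (sm S1 t - sm S2 t) * ((- 2 * beta * sm S1 t * sm S1 t - 2 * t * sq S1 t * sm S1 t)
         - (- 2 * beta * sm S2 t * sm S2 t - 2 * t * sq S2 t * sm S2 t))).
  assert (Hd : forall x, a < x < b -> is_derive (dist2 S1 S2) x (de x)).
  { intros x Hx. apply (dist2_deriv S1 S2 a b); auto. }
  assert (Hbd : forall x, a < x < b -> Rabs (de x) <= Kc beta B * dist2 S1 S2 x).
  { intros x Hx. assert (Hx' : a <= x <= b) by lra.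
    destruct (B1 x Hx') as [_ [Q1 [R1 M1]]]. destruct (B2 x Hx') as [_ [Q2 [R2 M2]]].
    pose proof (alg_bound beta Hb B x (sy S1 x) (sq S1 x) (sr S1 x) (sm S1 x) (sy S2 x) (sq S2 x) (sr S2 x) (sm S2 x) HB (Bt x Hx') Q1 R1 M1 Q2 R2 M2) as A.
    cbv zeta in A. unfold de, dist2. exact A. }
  assert (Hc : forall x, a <= x <= b -> continuity_pt (dist2 S1 S2) x).
  { intros; apply (dist2_cont S1 S2 a b); auto. }
  split.
  - apply (gronwall_fwd (dist2 S1 S2) de (Kc beta B) a b); auto.
    intros x Hx. pose proof (Hbd x Hx). apply Rabs_le_between in H. lra.
  - apply (gronwall_bwd (dist2 S1 S2) de (Kc beta B) a b); auto.
    intros x Hx. pose proof (Hbd x Hx). apply Rabs_le_between in H. lra.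
Qed.
End Sys2.


Definition agree (S1 S2 : state) t :=
  sy S1 t = sy S2 t /\ sq S1 t = sq S2 t /\ sr S1 t = sr S2 t /\ sm S1 t = sm S2 t.

Lemma dist2_agree S1 S2 t : agree S1 S2 t -> dist2 S1 S2 t = 0.
Proof. intros [A [B [C D]]]. unfold dist2. rewrite A, B, C, D. ring. Qed.

Lemma dist2_le0 S1 S2 t : dist2 S1 S2 t <= 0 -> agree S1 S2 t.
Proof. unfold dist2, agree. intros H.
  pose proof (Rle_0_sqr (sy S1 t - sy S2 t)). pose proof (Rle_0_sqr (sq S1 t - sq S2 t)).
  pose proof (Rle_0_sqr (sr S1 t - sr S2 t)). pose proof (Rle_0_sqr (sm S1 t - sm S2 t)). unfold Rsqr in *.
  assert (E1 : (sy S1 t - sy S2 t) * (sy S1 t - sy S2 t) = 0) by lra.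
  assert (E2 : (sq S1 t - sq S2 t) * (sq S1 t - sq S2 t) = 0) by lra.
  assert (E3 : (sr S1 t - sr S2 t) * (sr S1 t - sr S2 t) = 0) by lra.
  assert (E4 : (sm S1 t - sm S2 t) * (sm S1 t - sm S2 t) = 0) by lra.
  apply Rmult_integral in E1; apply Rmult_integral in E2; apply Rmult_integral in E3; apply Rmult_integral in E4.
  repeat split; lra.
Qed.

Lemma solves_sub beta S a b a' b' : a <= a' -> b' <= b -> solves beta S a b -> solves beta S a' b'.
Proof. intros H1 H2 H t Ht. apply H. lra. Qed.
Lemma ccont_sub S a b a' b' : a <= a' -> b' <= b -> ccont S a b -> ccont S a' b'.
Proof. intros H1 H2 H t Ht. apply H. lra. Qed.
Lemma bnd_sub S a b a' b' B : a <= a' -> b' <= b -> bnd S a b B -> bnd S a' b' B.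
Proof. intros H1 H2 H t Ht. apply H. lra. Qed.

Lemma ccont_bnd S a b : a <= b -> ccont S a b -> exists B, 0 <= B /\ bnd S a b B.
Proof.
  intros Hab C.
  destruct (cont_bound (sy S) a b Hab) as [B1 [P1 H1]]; [intros t Ht; apply (C t Ht)|].
  destruct (cont_bound (sq S) a b Hab) as [B2 [P2 H2]]; [intros t Ht; apply (C t Ht)|].
  destruct (cont_bound (sr S) a b Hab) as [B3 [P3 H3]]; [intros t Ht; apply (C t Ht)|].
  destruct (cont_bound (sm S) a b Hab) as [B4 [P4 H4]]; [intros t Ht; apply (C t Ht)|].
  exists (B1+B2+B3+B4). split; [lra|]. intros t Ht.
  specialize (H1 t Ht); specialize (H2 t Ht); specialize (H3 t Ht); specialize (H4 t Ht).
  repeat split; lra.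
Qed.

Lemma uniq beta (Hb : 0 <= beta) S1 S2 a b t0 : a <= t0 <= b ->
  solves beta S1 a b -> solves beta S2 a b -> ccont S1 a b -> ccont S2 a b ->
  agree S1 S2 t0 -> forall t, a <= t <= b -> agree S1 S2 t.
Proof.
  intros Ht0 H1 H2 C1 C2 A t Ht.
  destruct (ccont_bnd S1 a b) as [B1 [P1 Q1]]; [lra|auto|].
  destruct (ccont_bnd S2 a b) as [B2 [P2 Q2]]; [lra|auto|].
  set (B := B1 + B2 + Rabs a + Rabs b).
  assert (HB : 0 <= B) by (unfold B; pose proof (Rabs_pos a); pose proof (Rabs_pos b); lra).
  assert (Bn1 : bnd S1 a b B).
  { intros x Hx. destruct (Q1 x Hx) as [? [? [? ?]]]. unfold B. pose proof (Rabs_pos a); pose proof (Rabs_pos b). repeat split; lra. }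
  assert (Bn2 : bnd S2 a b B).
  { intros x Hx. destruct (Q2 x Hx) as [? [? [? ?]]]. unfold B. pose proof (Rabs_pos a); pose proof (Rabs_pos b). repeat split; lra. }
  assert (Bt : forall x, a <= x <= b -> Rabs x <= B).
  { intros x Hx. unfold B. unfold Rabs. repeat destruct Rcase_abs; lra. }
  apply dist2_le0.
  destruct (Rle_dec t t0) as [Hle|Hgt].
  - destruct (dep beta Hb S1 S2 t t0 B) with (t := t) as [_ D]; try lra.
    + apply (solves_sub beta S1 a b); lra || auto.
    + apply (solves_sub beta S2 a b); lra || auto.
    + apply (ccont_sub S1 a b); lra || auto.
    + apply (ccont_sub S2 a b); lra || auto.
    + apply (bnd_sub S1 a b); lra || auto.
    + apply (bnd_sub S2 a b); lra || auto.
    + intros; apply Bt; lra.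
    + rewrite (dist2_agree S1 S2 t0 A) in D. lra.
  - destruct (dep beta Hb S1 S2 t0 t B) with (t := t) as [D _]; try lra.
    + apply (solves_sub beta S1 a b); lra || auto.
    + apply (solves_sub beta S2 a b); lra || auto.
    + apply (ccont_sub S1 a b); lra || auto.
    + apply (ccont_sub S2 a b); lra || auto.
    + apply (bnd_sub S1 a b); lra || auto.
    + apply (bnd_sub S2 a b); lra || auto.
    + intros; apply Bt; lra.
    + rewrite (dist2_agree S1 S2 t0 A) in D. lra.
Qed.


Lemma ps_lin2 (a b : nat -> R) x la lb c1 c2 : is_pseries a x la -> is_pseries b x lb ->
  is_pseries (fun n => c1 * a n + c2 * b n) x (c1 * la + c2 * lb).
Proof.
  intros Ha Hb.
  pose proof (is_pseries_plus _ _ x _ _ (is_pseries_scal c1 a x la (Rmult_comm _ _) Ha)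
     (is_pseries_scal c2 b x lb (Rmult_comm _ _) Hb)) as H.
  apply (is_pseries_ext _ _ _ _ (fun n => eq_refl) H).
Qed.

Lemma ps_lin3 (a b c : nat -> R) x la lb lc c1 c2 c3 : is_pseries a x la -> is_pseries b x lb -> is_pseries c x lc ->
  is_pseries (fun n => c1 * a n + c2 * b n + c3 * c n) x (c1 * la + c2 * lb + c3 * lc).
Proof.
  intros Ha Hb Hc.
  pose proof (ps_lin2 _ _ x _ _ 1 c3 (ps_lin2 a b x la lb c1 c2 Ha Hb) Hc) as H.
  replace (c1 * la + c2 * lb + c3 * lc) with (1 * (c1 * la + c2 * lb) + c3 * lc) by ring.
  eapply is_pseries_ext; [|exact H]. intros n; simpl. ring.
Qed.

Lemma ps_scal1 (a : nat -> R) x la c1 : is_pseries a x la -> is_pseries (fun n => c1 * a n) x (c1 * la).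
Proof. intros Ha. apply (is_pseries_ext _ _ _ _ (fun n => eq_refl) (is_pseries_scal c1 a x la (Rmult_comm _ _) Ha)). Qed.

Lemma ps_incr (a : nat -> R) x la : is_pseries a x la -> is_pseries (PS_incr_1 a) x (x * la).
Proof. intros Ha. apply (is_pseries_incr_1 a x la Ha). Qed.

Lemma ps_of (a : nat -> R) x : Rbar_lt (Rabs x) (CV_radius a) -> is_pseries a x (PSeries a x).
Proof. intros H. apply PSeries_correct, CV_radius_inside, H. Qed.

Lemma ps_mult (a b : nat -> R) x : Rbar_lt (Rabs x) (CV_radius a) -> Rbar_lt (Rabs x) (CV_radius b) ->
  is_pseries (PS_mult a b) x (PSeries a x * PSeries b x).
Proof. intros Ha Hb. apply is_pseries_mult; auto; apply ps_of; auto. Qed.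

Lemma dshift (c : nat -> R) x0 t : Rbar_lt (Rabs (t - x0)) (CV_radius c) ->
  is_derive (fun t => PSeries c (t - x0)) t (PSeries (PS_derive c) (t - x0)).
Proof.
  intros H. eapply dval; [| apply (is_derive_comp (PSeries c) (fun t => t - x0));
     [apply is_derive_PSeries, H | apply dminus; [apply did | apply dconst]]].
  simpl. unfold scal; simpl. unfold mult; simpl. ring.
Qed.

Record V4 := mk4 { vy : R; vq : R; vr : R; vm : R }.

Section Local.
Variable beta x0 : R.
Variable d0 : V4.

Definition next (g : nat -> V4) (n : nat) : V4 :=
  let cq := fun k => vq (g k) in let cr := fun k => vr (g k) in let cm := fun k => vm (g k) in
  mk4 (cr n / INR (S n))
      (- beta * PS_mult cq cm n / INR (S n))
      ((- beta * PS_mult cm cr n - 2 * x0 * cm n - 2 * PS_incr_1 cm n) / INR (S n))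
      ((- 2 * beta * PS_mult cm cm n - 2 * x0 * PS_mult cq cm n - 2 * PS_incr_1 (PS_mult cq cm) n) / INR (S n)).

Fixpoint tab (n : nat) : nat -> V4 :=
  match n with
  | O => fun _ => d0
  | S n' => fun k => if Nat.leb k n' then tab n' k else next (tab n') n'
  end.

Definition coef (k : nat) : V4 := tab k k.

Lemma tab_stable n : forall k, (k <= n)%nat -> tab n k = coef k.
Proof.
  induction n; intros k Hk.
  - assert (k = 0%nat) by lia. subst. reflexivity.
  - simpl. destruct (Nat.leb k n) eqn:E.
    + apply Nat.leb_le in E. auto.
    + apply Nat.leb_gt in E. assert (k = S n) by lia. subst.
      assert (HL : Nat.leb (S n) n = false) by (apply Nat.leb_gt; lia).
      unfold coef. change (tab (S n) (S n)) with (if Nat.leb (S n) n then tab n (S n) else next (tab n) n).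
      rewrite HL. reflexivity.
Qed.

Lemma PS_mult_ext (a b a' b' : nat -> R) n : (forall k, (k <= n)%nat -> a k = a' k /\ b k = b' k) ->
  PS_mult a b n = PS_mult a' b' n.
Proof.
  intros H. unfold PS_mult. apply sum_eq. intros i Hi.
  destruct (H i Hi) as [-> _]. destruct (H (n - i)%nat) as [_ ->]; [lia|]. reflexivity.
Qed.

Lemma next_ext g h n : (forall k, (k <= n)%nat -> g k = h k) -> next g n = next h n.
Proof.
  intros H. unfold next.
  assert (Hn : g n = h n) by (apply H; lia). rewrite Hn.
  rewrite (PS_mult_ext (fun k => vq (g k)) (fun k => vm (g k)) (fun k => vq (h k)) (fun k => vm (h k)));
    [| intros k Hk; rewrite (H k Hk); auto].
  rewrite (PS_mult_ext (fun k => vm (g k)) (fun k => vr (g k)) (fun k => vm (h k)) (fun k => vr (h k)));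
    [| intros k Hk; rewrite (H k Hk); auto].
  rewrite (PS_mult_ext (fun k => vm (g k)) (fun k => vm (g k)) (fun k => vm (h k)) (fun k => vm (h k)));
    [| intros k Hk; rewrite (H k Hk); auto].
  assert (I1 : PS_incr_1 (fun k => vm (g k)) n = PS_incr_1 (fun k => vm (h k)) n).
  { destruct n; simpl; auto. rewrite H; auto. }
  assert (I2 : PS_incr_1 (PS_mult (fun k => vq (g k)) (fun k => vm (g k))) n
             = PS_incr_1 (PS_mult (fun k => vq (h k)) (fun k => vm (h k))) n).
  { destruct n; simpl; auto. apply PS_mult_ext. intros k Hk; rewrite H; auto. }
  rewrite I1, I2. reflexivity.
Qed.

Lemma coef_S n : coef (S n) = next coef n.
Proof.
  assert (HL : Nat.leb (S n) n = false) by (apply Nat.leb_gt; lia).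
  unfold coef at 1. change (tab (S n) (S n)) with (if Nat.leb (S n) n then tab n (S n) else next (tab n) n).
  rewrite HL.
  apply next_ext. intros k Hk. apply tab_stable; auto.
Qed.

Lemma coef_0 : coef 0 = d0.
Proof. reflexivity. Qed.

Definition cy n := vy (coef n).
Definition cq n := vq (coef n).
Definition cr n := vr (coef n).
Definition cm n := vm (coef n).

Lemma der_y n : PS_derive cy n = cr n.
Proof. unfold PS_derive, cy, cq, cr, cm. rewrite coef_S. unfold next. cbn [vy vq vr vm]. field. apply not_0_INR. lia. Qed.
Lemma der_q n : PS_derive cq n = - beta * PS_mult cq cm n.
Proof. unfold PS_derive, cy, cq, cr, cm. rewrite coef_S. unfold next. cbn [vy vq vr vm]. field. apply not_0_INR. lia. Qed.
Lemma der_r n : PS_derive cr n = - beta * PS_mult cm cr n - 2 * x0 * cm n - 2 * PS_incr_1 cm n.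
Proof. unfold PS_derive, cy, cq, cr, cm. rewrite coef_S. unfold next. cbn [vy vq vr vm]. field. apply not_0_INR. lia. Qed.
Lemma der_m n : PS_derive cm n = - 2 * beta * PS_mult cm cm n - 2 * x0 * PS_mult cq cm n - 2 * PS_incr_1 (PS_mult cq cm) n.
Proof. unfold PS_derive, cy, cq, cr, cm. rewrite coef_S. unfold next. cbn [vy vq vr vm]. field. apply not_0_INR. lia. Qed.


Lemma conv_bound (a b : nat -> R) n C L : 0 <= C -> 0 < L ->
  (forall k, (k <= n)%nat -> Rabs (a k) <= C * L ^ k) ->
  (forall k, (k <= n)%nat -> Rabs (b k) <= C * L ^ k) ->
  Rabs (PS_mult a b n) <= INR (S n) * (C * C * L ^ n).
Proof.
  intros HC HL Ha Hb. unfold PS_mult. eapply Rle_trans; [apply sum_f_R0_triangle|].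
  rewrite Rmult_comm, <- sum_cte. apply sum_Rle. intros k Hk.
  rewrite Rabs_mult. replace (L ^ n) with (L ^ k * L ^ (n - k)).
  - pose proof (Ha k Hk). pose proof (Hb (n - k)%nat ltac:(lia)).
    pose proof (Rabs_pos (a k)). pose proof (Rabs_pos (b (n - k)%nat)).
    pose proof (pow_lt L k HL). pose proof (pow_lt L (n - k) HL). nra.
  - rewrite <- pow_add. f_equal. lia.
Qed.

Lemma div_bound u N K : 1 <= N -> Rabs u <= N * K -> Rabs (u / N) <= K.
Proof.
  intros HN H. unfold Rdiv. rewrite Rabs_mult, Rabs_inv, (Rabs_right N) by lra.
  apply (Rmult_le_reg_r N); [lra|]. rewrite Rmult_assoc, Rinv_l by lra. lra.
Qed.

Lemma grow a N L : 0 <= a -> 1 <= N -> 1 <= L -> a <= N * (L * a).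
Proof. intros. assert (a <= L * a) by nra. assert (0 <= L * a) by nra. nra. Qed.

Section Bounds.
Variable B X : R.
Hypothesis Hbeta : 0 <= beta.
Hypothesis HB : 0 <= B.
Hypothesis HX : Rabs x0 <= X.
Hypothesis Hd0 : Rabs (vy d0) <= B /\ Rabs (vq d0) <= B /\ Rabs (vr d0) <= B /\ Rabs (vm d0) <= B.

Definition Cb := B + 1.
Definition Lb := 1 + (2 * beta + 2 * X + 2) * Cb.

Definition BD n := Rabs (cy n) <= Cb * Lb ^ n /\ Rabs (cq n) <= Cb * Lb ^ n /\
   Rabs (cr n) <= Cb * Lb ^ n /\ Rabs (cm n) <= Cb * Lb ^ n.

Lemma coef_bound_all n : forall k, (k <= n)%nat -> BD k.
Proof.
  assert (HX0 : 0 <= X) by (pose proof (Rabs_pos x0); lra).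
  assert (HC : 1 <= Cb) by (unfold Cb; lra).
  assert (HL1 : 1 <= Lb) by (unfold Lb; nra).
  assert (HLC1 : beta * Cb <= Lb) by (unfold Lb; nra).
  assert (HLC2 : (2 * beta + 2 * X + 2) * Cb <= Lb) by (unfold Lb; nra).
  induction n; intros k Hk.
  - assert (k = 0%nat) by lia. subst. unfold BD, cy, cq, cr, cm. rewrite coef_0. simpl.
    destruct Hd0 as [? [? [? ?]]]. unfold Cb. repeat split; lra.
  - destruct (le_lt_dec k n) as [Hkn|Hkn]; [apply IHn; auto|].
    assert (k = S n) by lia. subst k.
    assert (HN : 1 <= INR (S n)) by (rewrite S_INR; pose proof (pos_INR n); lra).
    assert (HLn : 1 <= Lb ^ n) by (apply pow_R1_Rle; lra).
    assert (HLS : Lb ^ S n = Lb * Lb ^ n) by reflexivity.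
    assert (Hy : forall k, (k <= n)%nat -> Rabs (cy k) <= Cb * Lb ^ k) by (intros k0 Hk0; apply (IHn k0 Hk0)).
    assert (Hq : forall k, (k <= n)%nat -> Rabs (cq k) <= Cb * Lb ^ k) by (intros k0 Hk0; apply (IHn k0 Hk0)).
    assert (Hr : forall k, (k <= n)%nat -> Rabs (cr k) <= Cb * Lb ^ k) by (intros k0 Hk0; apply (IHn k0 Hk0)).
    assert (Hm : forall k, (k <= n)%nat -> Rabs (cm k) <= Cb * Lb ^ k) by (intros k0 Hk0; apply (IHn k0 Hk0)).
    assert (HL0 : 0 < Lb) by lra. assert (HC0 : 0 <= Cb) by lra.
    pose proof (conv_bound cq cm n Cb Lb HC0 HL0 Hq Hm) as Pqm.
    pose proof (conv_bound cm cr n Cb Lb HC0 HL0 Hm Hr) as Pmr.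
    pose proof (conv_bound cm cm n Cb Lb HC0 HL0 Hm Hm) as Pmm.
    assert (Im : Rabs (PS_incr_1 cm n) <= Cb * Lb ^ n).
    { destruct n as [|n']; simpl PS_incr_1.
      - change (Rabs 0 <= Cb * Lb ^ 0). rewrite Rabs_R0. simpl. lra.
      - pose proof (Hm n' ltac:(lia)). simpl pow. simpl pow in H.
        assert (0 <= Lb ^ n') by (apply pow_le; lra). assert (0 <= Cb * Lb ^ n') by (apply Rmult_le_pos; lra). nra. }
    assert (Iqm : Rabs (PS_incr_1 (PS_mult cq cm) n) <= INR (S n) * (Cb * Cb * Lb ^ n)).
    { destruct n as [|n']; simpl PS_incr_1.
      - change (Rabs 0 <= INR 1 * (Cb * Cb * Lb ^ 0)). rewrite Rabs_R0. simpl. nra.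
      - pose proof (conv_bound cq cm n' Cb Lb HC0 HL0 (fun k Hk => Hq k ltac:(lia)) (fun k Hk => Hm k ltac:(lia))) as P.
        rewrite (S_INR (S n')). simpl pow. 
        assert (0 <= Lb ^ n') by (apply pow_le; lra). pose proof (pos_INR (S n')). assert (HK: 0 <= Cb*Cb*Lb^n') by (repeat apply Rmult_le_pos; lra). assert (INR (S n') * (Cb*Cb*Lb^n') <= (INR (S n') + 1) * (Cb * Cb * (Lb * Lb ^ n'))) by (replace (Cb*Cb*(Lb*Lb^n')) with (Lb * (Cb*Cb*Lb^n')) by ring; apply Rmult_le_compat; nra). lra. }
    assert (Hx0m : Rabs (x0 * cm n) <= X * (Cb * Lb ^ n)).
    { rewrite Rabs_mult. apply Rmult_le_compat; auto using Rabs_pos. }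
    assert (Hx0qm : Rabs (x0 * PS_mult cq cm n) <= X * (INR (S n) * (Cb * Cb * Lb ^ n))).
    { rewrite Rabs_mult. apply Rmult_le_compat; auto using Rabs_pos. }
    assert (0 <= Cb * Lb ^ n) by nra.
    unfold BD. 
    unfold cy at 1, cq at 1, cr at 1, cm at 1. rewrite coef_S. unfold next. cbn [vy vq vr vm].
    fold (cq) (cr) (cm). change (vr (coef n)) with (cr n). change (vm (coef n)) with (cm n).
    repeat split.
    + apply div_bound; auto. rewrite HLS. pose proof (Hr n ltac:(lia)).
      pose proof (grow (Cb * Lb ^ n) (INR (S n)) Lb ltac:(lra) HN HL1).
      replace (INR (S n) * (Cb * (Lb * Lb ^ n))) with (INR (S n) * (Lb * (Cb * Lb ^ n))) by ring. lra.
    + apply div_bound; auto. rewrite HLS.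
      replace (- beta * PS_mult cq cm n) with (- (beta * PS_mult cq cm n)) by ring.
      rewrite Rabs_Ropp, Rabs_mult, (Rabs_right beta) by lra.
      assert (beta * Rabs (PS_mult cq cm n) <= beta * (INR (S n) * (Cb * Cb * Lb ^ n))) by (apply Rmult_le_compat_l; auto).
      assert (beta * Cb * (Cb * Lb ^ n) <= Lb * (Cb * Lb ^ n)) by (apply Rmult_le_compat_r; auto).
      nra.
    + apply div_bound; auto. rewrite HLS.
      set (u1 := - beta * PS_mult cm cr n). set (u2 := 2 * x0 * cm n). set (u3 := 2 * PS_incr_1 cm n).
      assert (Rabs u1 <= beta * (INR (S n) * (Cb * Cb * Lb ^ n))).
      { unfold u1. replace (- beta * PS_mult cm cr n) with (- (beta * PS_mult cm cr n)) by ring.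
        rewrite Rabs_Ropp, Rabs_mult, (Rabs_right beta) by lra. apply Rmult_le_compat_l; auto. }
      assert (Rabs u2 <= 2 * (X * (Cb * Lb ^ n))).
      { unfold u2. rewrite Rmult_assoc, Rabs_mult, (Rabs_right 2) by lra. lra. }
      assert (Rabs u3 <= 2 * (Cb * Lb ^ n)).
      { unfold u3. rewrite Rabs_mult, (Rabs_right 2) by lra. lra. }
      pose proof (Rabs_triang (u1 - u2) (- u3)). pose proof (Rabs_triang u1 (- u2)).
      rewrite Rabs_Ropp in *. unfold Rminus.
      assert ((beta * Cb + 2 * X + 2) * (Cb * Lb ^ n) <= Lb * (Cb * Lb ^ n)).
      { apply Rmult_le_compat_r; auto. nra. }
      unfold Rminus in H3.
      assert (E1 : 2 * (X * (Cb * Lb ^ n)) <= INR (S n) * (2 * X * (Cb * Lb ^ n))).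
      { replace (2 * (X * (Cb * Lb ^ n))) with (1 * (2 * X * (Cb * Lb ^ n))) by ring.
        apply Rmult_le_compat_r; [|lra]. apply Rmult_le_pos; lra. }
      assert (E2 : 2 * (Cb * Lb ^ n) <= INR (S n) * (2 * (Cb * Lb ^ n))).
      { replace (2 * (Cb * Lb ^ n)) with (1 * (2 * (Cb * Lb ^ n))) at 1 by ring.
        apply Rmult_le_compat_r; lra. }
      assert (E3 : INR (S n) * ((beta * Cb + 2 * X + 2) * (Cb * Lb ^ n)) <= INR (S n) * (Lb * (Cb * Lb ^ n))).
      { apply Rmult_le_compat_l; lra. }
      replace (INR (S n) * (Cb * (Lb * Lb ^ n))) with (INR (S n) * (Lb * (Cb * Lb ^ n))) by ring.
      replace (beta * (INR (S n) * (Cb * Cb * Lb ^ n))) with (INR (S n) * (beta * Cb * (Cb * Lb ^ n))) in H0 by ring.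
      assert (E4 : INR (S n) * ((beta * Cb + 2 * X + 2) * (Cb * Lb ^ n)) =
         INR (S n) * (beta * Cb * (Cb * Lb ^ n)) + INR (S n) * (2 * X * (Cb * Lb ^ n)) + INR (S n) * (2 * (Cb * Lb ^ n))) by ring.
      lra.
    + apply div_bound; auto. rewrite HLS.
      set (u1 := - 2 * beta * PS_mult cm cm n). set (u2 := 2 * x0 * PS_mult cq cm n).
      set (u3 := 2 * PS_incr_1 (PS_mult cq cm) n).
      assert (Rabs u1 <= 2 * beta * (INR (S n) * (Cb * Cb * Lb ^ n))).
      { unfold u1. replace (- 2 * beta * PS_mult cm cm n) with (- (2 * beta * PS_mult cm cm n)) by ring.
        rewrite Rabs_Ropp, Rabs_mult, (Rabs_right (2 * beta)) by lra. apply Rmult_le_compat_l; auto. lra. }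
      assert (Rabs u2 <= 2 * (X * (INR (S n) * (Cb * Cb * Lb ^ n)))).
      { unfold u2. rewrite Rmult_assoc, Rabs_mult, (Rabs_right 2) by lra. lra. }
      assert (Rabs u3 <= 2 * (INR (S n) * (Cb * Cb * Lb ^ n))).
      { unfold u3. rewrite Rabs_mult, (Rabs_right 2) by lra. lra. }
      pose proof (Rabs_triang (u1 - u2) (- u3)). pose proof (Rabs_triang u1 (- u2)).
      rewrite Rabs_Ropp in *. unfold Rminus.
      assert ((2 * beta + 2 * X + 2) * Cb * (Cb * Lb ^ n) <= Lb * (Cb * Lb ^ n)).
      { apply Rmult_le_compat_r; auto. }
      unfold Rminus in H3.
      assert (E3 : INR (S n) * ((2 * beta + 2 * X + 2) * Cb * (Cb * Lb ^ n)) <= INR (S n) * (Lb * (Cb * Lb ^ n))).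
      { apply Rmult_le_compat_l; lra. }
      replace (INR (S n) * (Cb * (Lb * Lb ^ n))) with (INR (S n) * (Lb * (Cb * Lb ^ n))) by ring.
      assert (E4 : INR (S n) * ((2 * beta + 2 * X + 2) * Cb * (Cb * Lb ^ n)) =
         2 * beta * (INR (S n) * (Cb * Cb * Lb ^ n)) + 2 * (X * (INR (S n) * (Cb * Cb * Lb ^ n))) + 2 * (INR (S n) * (Cb * Cb * Lb ^ n))) by ring.
      lra.
Qed.

Lemma coef_bound n : BD n.
Proof. apply (coef_bound_all n n). lia. Qed.

End Bounds.
End Local.


Section LocalSol.
Variable beta x0 : R.
Variable d0 : V4.
Variable B X : R.
Hypothesis Hbeta : 0 <= beta.
Hypothesis HB : 0 <= B.
Hypothesis HX : Rabs x0 <= X.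
Hypothesis Hd0 : Rabs (vy d0) <= B /\ Rabs (vq d0) <= B /\ Rabs (vr d0) <= B /\ Rabs (vm d0) <= B.

Let L := Lb beta B X.
Let C := Cb B.
Definition R0 := 3 / (4 * L).
Definition rho := 1 / (2 * L).

Lemma L_ge1 : 1 <= L.
Proof. unfold L, Lb, Cb. pose proof (Rabs_pos x0). nra. Qed.

Lemma rho_pos : 0 < rho.
Proof. pose proof L_ge1. unfold rho. apply Rdiv_lt_0_compat; lra. Qed.

Lemma rho_lt : rho < R0.
Proof. pose proof L_ge1. unfold rho, R0. apply (Rmult_lt_reg_r (4 * L)); [lra|].
  unfold Rdiv. rewrite !Rmult_assoc, Rinv_l by lra. field_simplify; lra. Qed.

Lemma disk (c : nat -> R) : (forall n, Rabs (c n) <= C * L ^ n) -> Rbar_le R0 (CV_radius c).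
Proof.
  intros Hc. apply CVr_ge. unfold CV_disk.
  pose proof L_ge1.
  apply (@ex_series_le R_AbsRing R_CompleteNormedModule _ (fun n => C * (3/4) ^ n)).
  - intros n. change (norm (Rabs (c n * R0 ^ n))) with (Rabs (Rabs (c n * R0 ^ n))).
    rewrite Rabs_Rabsolu, Rabs_mult.
    assert (HR0 : 0 <= R0) by (unfold R0; apply Rlt_le, Rdiv_lt_0_compat; lra).
    rewrite (Rabs_right (R0 ^ n)) by (apply Rle_ge, pow_le; lra).
    assert (E : C * (3/4)^n = C * L^n * R0^n).
    { rewrite Rmult_assoc, <- Rpow_mult_distr. f_equal. f_equal. unfold R0. field. lra. }
    rewrite E. apply Rmult_le_compat_r; [apply pow_le; lra| apply Hc].
  - apply (ex_series_scal (V := R_NormedModule) C). apply ex_series_geom. rewrite Rabs_right; lra.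
Qed.

Lemma rad_y : Rbar_le R0 (CV_radius (cy beta x0 d0)).
Proof. apply disk. intros n. destruct (coef_bound beta x0 d0 B X Hbeta HB HX Hd0 n) as [? [? [? ?]]]; unfold L, C; assumption. Qed.
Lemma rad_q : Rbar_le R0 (CV_radius (cq beta x0 d0)).
Proof. apply disk. intros n. destruct (coef_bound beta x0 d0 B X Hbeta HB HX Hd0 n) as [? [? [? ?]]]; unfold L, C; assumption. Qed.
Lemma rad_r : Rbar_le R0 (CV_radius (cr beta x0 d0)).
Proof. apply disk. intros n. destruct (coef_bound beta x0 d0 B X Hbeta HB HX Hd0 n) as [? [? [? ?]]]; unfold L, C; assumption. Qed.
Lemma rad_m : Rbar_le R0 (CV_radius (cm beta x0 d0)).
Proof. apply disk. intros n. destruct (coef_bound beta x0 d0 B X Hbeta HB HX Hd0 n) as [? [? [? ?]]]; unfold L, C; assumption. Qed.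

Lemma in_rad (c : nat -> R) s : Rbar_le R0 (CV_radius c) -> Rabs s < R0 -> Rbar_lt (Rabs s) (CV_radius c).
Proof. intros H Hs. destruct (CV_radius c) as [r| |]; simpl in *; auto; lra. Qed.

Definition LS : state := St (fun t => PSeries (cy beta x0 d0) (t - x0)) (fun t => PSeries (cq beta x0 d0) (t - x0))
  (fun t => PSeries (cr beta x0 d0) (t - x0)) (fun t => PSeries (cm beta x0 d0) (t - x0)).

Lemma LS_deriv t : Rabs (t - x0) < R0 ->
    is_derive (sy LS) t (sr LS t) /\
    is_derive (sq LS) t (- beta * sq LS t * sm LS t) /\
    is_derive (sr LS) t (- beta * sm LS t * sr LS t - 2 * t * sm LS t) /\
    is_derive (sm LS) t (- 2 * beta * sm LS t * sm LS t - 2 * t * sq LS t * sm LS t).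
Proof.
  intros Ht. set (s := t - x0).
  pose proof (in_rad _ s rad_y Ht) as Iy. pose proof (in_rad _ s rad_q Ht) as Iq.
  pose proof (in_rad _ s rad_r Ht) as Ir. pose proof (in_rad _ s rad_m Ht) as Im.
  unfold LS; cbn [sy sq sr sm]. split; [|split; [|split]].
  - eapply dval; [| apply dshift; auto]. apply PSeries_ext. intros n. apply der_y.
  - eapply dval; [| apply dshift; auto]. fold s.
    rewrite Rmult_assoc. apply is_pseries_unique. eapply is_pseries_ext; [| apply ps_scal1, ps_mult; auto].
    intros n; simpl. rewrite der_q. reflexivity.
  - eapply dval; [| apply dshift; auto]. fold s.
    apply is_pseries_unique.
    replace (- beta * PSeries (cm beta x0 d0) s * PSeries (cr beta x0 d0) s - 2 * t * PSeries (cm beta x0 d0) s)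
      with ((- beta) * (PSeries (cm beta x0 d0) s * PSeries (cr beta x0 d0) s) + (- 2 * x0) * PSeries (cm beta x0 d0) s
            + (-2) * (s * PSeries (cm beta x0 d0) s)) by (unfold s; ring).
    eapply is_pseries_ext; [| apply ps_lin3; [apply ps_mult; auto | apply ps_of; auto | apply ps_incr, ps_of; auto]].
    intros n; simpl. rewrite der_r. ring.
  - eapply dval; [| apply dshift; auto]. fold s.
    apply is_pseries_unique.
    replace (- 2 * beta * PSeries (cm beta x0 d0) s * PSeries (cm beta x0 d0) s - 2 * t * PSeries (cq beta x0 d0) s * PSeries (cm beta x0 d0) s)
      with ((- 2 * beta) * (PSeries (cm beta x0 d0) s * PSeries (cm beta x0 d0) s) + (- 2 * x0) * (PSeries (cq beta x0 d0) s * PSeries (cm beta x0 d0) s)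
            + (-2) * (s * (PSeries (cq beta x0 d0) s * PSeries (cm beta x0 d0) s))) by (unfold s; ring).
    eapply is_pseries_ext; [| apply ps_lin3; [apply ps_mult; auto | apply ps_mult; auto | apply ps_incr, ps_mult; auto]].
    intros n; simpl. rewrite der_m. ring.
Qed.

Lemma LS_solves : solves beta LS (x0 - rho) (x0 + rho).
Proof. intros t Ht. apply LS_deriv. pose proof rho_lt. apply Rabs_def1; lra. Qed.

Lemma LS_ccont : ccont LS (x0 - rho) (x0 + rho).
Proof.
  intros t Ht. assert (Rabs (t - x0) < R0) by (pose proof rho_lt; apply Rabs_def1; lra).
  destruct (LS_deriv t H) as [A [B' [C' D]]].
  split; [|split; [|split]]; apply cont_of_deriv; eexists; eauto.
Qed.

Lemma LS_init : agree LS (St (fun _ => vy d0) (fun _ => vq d0) (fun _ => vr d0) (fun _ => vm d0)) x0.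
Proof.
  unfold agree; simpl. replace (x0 - x0) with 0 by ring. rewrite !PSeries_0.
  unfold cy, cq, cr, cm. rewrite coef_0. auto.
Qed.

Lemma LS_pseries t : Rabs (t - x0) < rho -> is_pseries (cy beta x0 d0) (t - x0) (sy LS t).
Proof. intros H. simpl. apply ps_of. apply in_rad; [apply rad_y|]. pose proof rho_lt; lra. Qed.

End LocalSol.


Lemma loc_of (x : R) (P : R -> Prop) (eps : R) : 0 < eps ->
  (forall y, Rabs (y - x) < eps -> P y) -> locally x P.
Proof. intros He H. exists (mkposreal eps He). intros y Hy. apply H. exact Hy. Qed.

Lemma solves_ccont beta S a b c d : solves beta S a b -> a < c -> d < b -> ccont S c d.
Proof.
  intros H Hc Hd t Ht. destruct (H t ltac:(lra)) as [A [B [C D]]].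
  split; [|split; [|split]]; apply cont_of_deriv; eexists; eauto.
Qed.

Definition cst (d : V4) : state := St (fun _ => vy d) (fun _ => vq d) (fun _ => vr d) (fun _ => vm d).

Lemma cst_solves beta y q a b : solves beta (cst (mk4 y q 0 0)) a b.
Proof.
  intros t Ht. unfold cst; cbn [sy sq sr sm vy vq vr vm].
  split; [|split; [|split]]; (eapply dval; [| apply dconst]); ring.
Qed.

Definition gl (f1 f2 : R -> R) (c : R) := fun t => if Rle_dec t c then f1 t else f2 t.
Definition glue (S1 S2 : state) c := St (gl (sy S1) (sy S2) c) (gl (sq S1) (sq S2) c) (gl (sr S1) (sr S2) c) (gl (sm S1) (sm S2) c).

Lemma gl_left f1 f2 c t : t <= c -> gl f1 f2 c t = f1 t.
Proof. intros H. unfold gl. destruct (Rle_dec t c); auto. lra. Qed.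
Lemma gl_right f1 f2 c t : c < t -> gl f1 f2 c t = f2 t.
Proof. intros H. unfold gl. destruct (Rle_dec t c); auto. lra. Qed.

Lemma gl_loc f1 f2 c d t : 0 < d -> (forall s, c - d < s < c + d -> f1 s = f2 s) ->
  (t <= c -> locally t (fun s => f1 s = gl f1 f2 c s)) /\
  (c <= t -> locally t (fun s => f2 s = gl f1 f2 c s)).
Proof.
  intros Hd Heq. split; intros Ht.
  - destruct (Rlt_dec t c) as [Hlt|Hge].
    + apply (loc_of t _ (c - t)); [lra|]. intros s Hs. apply Rabs_def2 in Hs. rewrite gl_left; lra.
    + apply (loc_of t _ d); auto. intros s Hs. apply Rabs_def2 in Hs. unfold gl.
      destruct (Rle_dec s c); auto. apply Heq. lra.
  - destruct (Rlt_dec c t) as [Hlt|Hge].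
    + apply (loc_of t _ (t - c)); [lra|]. intros s Hs. apply Rabs_def2 in Hs. rewrite gl_right; lra.
    + apply (loc_of t _ d); auto. intros s Hs. apply Rabs_def2 in Hs. unfold gl.
      destruct (Rle_dec s c); auto. symmetry. apply Heq. lra.
Qed.

Lemma glue_solves beta (Hb : 0 <= beta) S1 S2 A T c rho : A < c < T -> 0 < rho ->
  solves beta S1 A T -> solves beta S2 (c - rho) (c + rho) -> agree S1 S2 c ->
  solves beta (glue S1 S2 c) A (c + rho).
Proof.
  intros Hc Hr H1 H2 Hag.
  set (d := Rmin (Rmin (c - A) (T - c)) rho / 2).
  assert (Hd : 0 < d) by (unfold d; apply Rdiv_lt_0_compat; [repeat apply Rmin_glb_lt; lra| lra]).
  assert (Hd1 : d < c - A /\ d < T - c /\ d < rho).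
  { unfold d. pose proof (Rmin_l (Rmin (c - A) (T - c)) rho). pose proof (Rmin_r (Rmin (c - A) (T - c)) rho).
    pose proof (Rmin_l (c - A) (T - c)). pose proof (Rmin_r (c - A) (T - c)). lra. }
  assert (Hu : forall s, c - d <= s <= c + d -> agree S1 S2 s).
  { intros s Hs. apply (uniq beta Hb S1 S2 (c - d) (c + d) c); auto; try lra.
    - apply (solves_sub beta S1 A T); auto; lra.
    - apply (solves_sub beta S2 (c - rho) (c + rho)); auto; lra.
    - apply (solves_ccont beta S1 A T); auto; lra.
    - apply (solves_ccont beta S2 (c - rho) (c + rho)); auto; lra. }
  assert (Ey : forall s, c - d < s < c + d -> sy S1 s = sy S2 s) by (intros s Hs; apply (Hu s ltac:(lra))).
  assert (Eq : forall s, c - d < s < c + d -> sq S1 s = sq S2 s) by (intros s Hs; apply (Hu s ltac:(lra))).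
  assert (Er : forall s, c - d < s < c + d -> sr S1 s = sr S2 s) by (intros s Hs; apply (Hu s ltac:(lra))).
  assert (Em : forall s, c - d < s < c + d -> sm S1 s = sm S2 s) by (intros s Hs; apply (Hu s ltac:(lra))).
  intros t Ht. unfold glue; cbn [sy sq sr sm].
  destruct (Rle_dec t c) as [Hle|Hgt].
  - rewrite !gl_left by lra. destruct (H1 t ltac:(lra)) as [Dy [Dq [Dr Dm]]].
    split; [|split; [|split]]; eapply is_derive_ext_loc; try eassumption;
      apply (gl_loc _ _ c d t Hd); auto.
  - rewrite !gl_right by lra. destruct (H2 t ltac:(lra)) as [Dy [Dq [Dr Dm]]].
    split; [|split; [|split]]; eapply is_derive_ext_loc; try eassumption;
      apply (gl_loc _ _ c d t Hd); auto; lra.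
Qed.

Lemma glue_agree S1 S2 c t : t <= c -> agree (glue S1 S2 c) S1 t.
Proof. intros H. unfold agree, glue; cbn [sy sq sr sm]. rewrite !gl_left by lra. auto. Qed.


Section AP.
Variable beta gamma : R.
Hypothesis Hb : 0 <= beta.
Hypothesis Hg : 0 < gamma.

Definition d0 a := mk4 a (1 / (1 + beta * a)) (gamma * a / (1 + beta * a)) (1 / (1 + beta * a) * (gamma * a / (1 + beta * a))).

Lemma invariants S A T a t1 : A < 0 -> 0 <= t1 < T -> 0 <= a -> solves beta S A T -> agree S (cst (d0 a)) 0 ->
  forall t, 0 <= t <= t1 -> sq S t * (1 + beta * sy S t) = 1 /\ sm S t = sq S t * sr S t.
Proof.
  intros HA Ht1 Ha HS H0.
  assert (HC : ccont S 0 t1) by (apply (solves_ccont beta S A T); auto; lra).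
  destruct (cont_bound (sm S) 0 t1 ltac:(lra)) as [Bm [HBm HmB]]; [intros t Ht; apply (HC t Ht)|].
  set (D1 := fun t => sm S t - sq S t * sr S t).
  set (D2 := fun t => sq S t * (1 + beta * sy S t) - 1).
  set (e := fun t => D1 t * D1 t + D2 t * D2 t).
  set (de := fun t => 2 * D1 t * (- 2 * beta * sm S t * D1 t) + 2 * D2 t * (- beta * sm S t * D2 t - beta * D1 t)).
  assert (Hd : forall t, 0 < t < t1 -> is_derive e t (de t)).
  { intros t Ht. destruct (HS t ltac:(lra)) as [Dy [Dq [Dr Dm]]].
    assert (DD1 : is_derive D1 t (- 2 * beta * sm S t * D1 t)).
    { unfold D1. eapply dval; [| apply dminus; [apply Dm| apply dmult; [apply Dq | apply Dr]]]. cbv beta. ring. }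
    assert (DD2 : is_derive D2 t (- beta * sm S t * D2 t - beta * D1 t)).
    { unfold D2, D1. eapply dval; [| apply dminus; [apply dmult; [apply Dq| apply dplus; [apply dconst| apply dscal, Dy]] | apply dconst]]. cbv beta. ring. }
    unfold e, de. eapply dval; [| apply dplus; apply dmult; eauto]. ring. }
  assert (Hc : forall t, 0 <= t <= t1 -> continuity_pt e t).
  { intros t Ht. destruct (HC t Ht) as [Cy [Cq [Cr Cm]]]. unfold e, D1, D2.
    apply cplus; apply cmult; (apply cminus; [|apply continuity_pt_const; intros ? ?; reflexivity]) || apply cminus; 
    try (apply cmult; auto); try (apply cplus; [apply continuity_pt_const; intros ? ?; reflexivity| apply continuity_pt_scal; auto]); auto. }
  assert (Hle : forall t, 0 < t < t1 -> de t <= (4 * beta * Bm + 2 * beta) * e t).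
  { intros t Ht. pose proof (HmB t ltac:(lra)) as Hm. apply Rabs_le_between in Hm.
    unfold de, e. set (u := D1 t) in *. set (v := D2 t) in *. set (m := sm S t) in *.
    assert (0 <= beta * (u * u)) by (apply Rmult_le_pos; [lra| apply Rle_0_sqr]).
    assert (0 <= beta * (v * v)) by (apply Rmult_le_pos; [lra| apply Rle_0_sqr]).
    assert (- m * (beta * (u * u)) <= Bm * (beta * (u * u))) by (apply Rmult_le_compat_r; lra).
    assert (- m * (beta * (v * v)) <= Bm * (beta * (v * v))) by (apply Rmult_le_compat_r; lra).
    assert (- 2 * (u * v) <= u * u + v * v) by (pose proof (Rle_0_sqr (u + v)); unfold Rsqr in *; nra).
    assert (beta * (- 2 * (u * v)) <= beta * (u * u + v * v)) by (apply Rmult_le_compat_l; lra).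
    nra. }
  assert (He0 : e 0 = 0).
  { destruct H0 as [E1 [E2 [E3 E4]]]. unfold e, D1, D2. rewrite E1, E2, E3, E4. unfold cst, d0; cbn [sy sq sr sm vy vq vr vm].
    assert (0 < 1 + beta * a) by nra.
    assert (Hq : 1 / (1 + beta * a) * (1 + beta * a) = 1) by (field; lra). rewrite Hq. ring. }
  intros t Ht.
  pose proof (gronwall_fwd e de _ 0 t1 ltac:(lra) Hd Hle Hc t Ht) as G.
  rewrite He0, Rmult_0_l in G.
  assert (G1 : D1 t * D1 t + D2 t * D2 t <= 0) by exact G.
  pose proof (Rle_0_sqr (D1 t)). pose proof (Rle_0_sqr (D2 t)). unfold Rsqr in *.
  assert (Z1 : D1 t * D1 t = 0) by lra. assert (Z2 : D2 t * D2 t = 0) by lra.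
  apply Rmult_integral in Z1. apply Rmult_integral in Z2.
  unfold D1, D2 in Z1, Z2. split; lra.
Qed.

Lemma cst_ccont y q a b : ccont (cst (mk4 y q 0 0)) a b.
Proof. apply (solves_ccont 0 _ (a - 1) (b + 1)); [apply cst_solves| lra | lra]. Qed.

Lemma apriori S A T a : A < 0 -> 0 < T -> 0 <= a -> solves beta S A T -> agree S (cst (d0 a)) 0 ->
  forall t, 0 <= t < T ->
   (sq S t * (1 + beta * sy S t) = 1 /\ sm S t = sq S t * sr S t) /\
   (0 <= sr S t <= gamma * a) /\ (a <= sy S t <= a + gamma * a * t) /\
   (0 < sq S t <= 1) /\ (0 <= sm S t <= gamma * a).
Proof.
  intros HA HT Ha HS H0 t1 Ht1.
  pose proof (invariants S A T a t1 HA Ht1 Ha HS H0) as Inv.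
  assert (HC : ccont S 0 t1) by (apply (solves_ccont beta S A T); auto; lra).
  assert (HS1 : solves beta S 0 t1) by (apply (solves_sub beta S A T); lra || auto).
  destruct H0 as [E1 [E2 [E3 E4]]]. unfold cst, d0 in E1, E2, E3, E4; cbn [sy sq sr sm vy vq vr vm] in E1, E2, E3, E4.
  assert (Hpa : 0 < 1 + beta * a) by nra.
  assert (Hr0 : 0 <= sr S 0) by (rewrite E3; apply Rmult_le_pos; [nra| apply Rlt_le, Rinv_0_lt_compat; lra]).
  assert (Hrpos : forall s, 0 <= s <= t1 -> 0 <= sr S s).
  { intros s Hs. destruct (Rle_dec 0 (sr S s)) as [ok|Hneg]; [exact ok|]. exfalso.
    assert (Hz : exists s0, 0 <= s0 <= s /\ sr S s0 = 0).
    { destruct (Req_dec (sr S 0) 0) as [Z|NZ]; [exists 0; split; [lra| auto]|].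
      assert (Hs0 : 0 < s).
      { destruct (Req_dec s 0) as [->|]; [lra| lra]. }
      destruct (Ranalysis5.IVT_interv (fun x => - sr S x) 0 s) as [z [Hz1 Hz2]]; try lra.
      - intros x Hx. apply continuity_pt_opp. apply (HC x ltac:(lra)).
      - exists z. split; auto. lra. }
    destruct Hz as [s0 [Hs0 Hrs0]].
    assert (Hm0 : sm S s0 = 0) by (destruct (Inv s0 ltac:(lra)) as [_ ->]; rewrite Hrs0; ring).
    pose proof (uniq beta Hb S (cst (mk4 (sy S s0) (sq S s0) 0 0)) 0 t1 s0 ltac:(lra) HS1 (cst_solves beta _ _ 0 t1) HC (cst_ccont _ _ 0 t1)) as U.
    destruct (U ltac:(unfold agree, cst; cbn [sy sq sr sm vy vq vr vm]; auto) s ltac:(lra)) as [_ [_ [U3 _]]].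
    unfold cst in U3; cbn [sr vr] in U3. lra. }
  assert (Hy : forall s, 0 <= s <= t1 -> a <= sy S s).
  { intros s Hs. rewrite <- E1. apply (nondecr_open (sy S) (sr S) 0 s); try lra.
    - intros x Hx. apply (HS x ltac:(lra)).
    - intros x Hx. apply Hrpos; lra.
    - intros x Hx. apply (HC x ltac:(lra)). }
  assert (Hq : forall s, 0 <= s <= t1 -> 0 < sq S s <= 1).
  { intros s Hs. destruct (Inv s Hs) as [I1 _]. pose proof (Hy s Hs).
    assert (1 <= 1 + beta * sy S s) by nra. split; nra. }
  assert (Hw : forall s, 0 <= s <= t1 -> (1 + beta * sy S s) * sr S s <= gamma * a).
  { intros s Hs.
    assert (Hw0 : (1 + beta * sy S 0) * sr S 0 = gamma * a) by (rewrite E1, E3; field; lra).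
    rewrite <- Hw0.
    apply (nonincr_open (fun x => (1 + beta * sy S x) * sr S x) (fun x => - 2 * x * sr S x) 0 s); try lra.
    - intros x Hx. destruct (HS x ltac:(lra)) as [Dy [_ [Dr _]]].
      destruct (Inv x ltac:(lra)) as [I1 I2].
      eapply dval; [| apply dmult; [apply dplus; [apply dconst | apply dscal, Dy] | apply Dr]].
      rewrite I2. replace (- beta * (sq S x * sr S x) * sr S x - 2 * x * (sq S x * sr S x)) with
        (- (sq S x) * (beta * sr S x * sr S x + 2 * x * sr S x)) by ring.
      replace (0 + beta * sr S x) with (beta * sr S x) by ring.
      transitivity (beta * sr S x * sr S x - (sq S x * (1 + beta * sy S x)) * (beta * sr S x * sr S x + 2 * x * sr S x)).
      + ring.
      + rewrite I1. ring.
    - intros x Hx. pose proof (Hrpos x ltac:(lra)). nra.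
    - intros x Hx. destruct (HC x ltac:(lra)) as [Cy [_ [Cr _]]].
      apply cmult; auto. apply cplus; [apply continuity_pt_const; intros ? ?; reflexivity| apply continuity_pt_scal; auto]. }
  assert (Hr : forall s, 0 <= s <= t1 -> sr S s <= gamma * a).
  { intros s Hs. pose proof (Hw s Hs). pose proof (Hy s Hs). pose proof (Hrpos s Hs).
    assert (1 <= 1 + beta * sy S s) by nra. nra. }
  assert (Ht : 0 <= t1 <= t1) by lra.
  split; [apply Inv; lra|].
  split; [split; [apply Hrpos; lra| apply Hr; lra]|].
  split; [split; [apply Hy; lra|]|].
  - assert (G : sy S t1 - gamma * a * t1 <= sy S 0 - gamma * a * 0).
    { apply (nonincr_open (fun x => sy S x - gamma * a * x) (fun x => sr S x - gamma * a) 0 t1); try lra.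
      - intros x Hx. eapply dval; [| apply dminus; [apply (HS x ltac:(lra)) | apply dscal, did]]. ring.
      - intros x Hx. pose proof (Hr x ltac:(lra)). lra.
      - intros x Hx. apply cminus; [apply (HC x ltac:(lra))| apply continuity_pt_scal, continuity_pt_id]. }
    rewrite E1 in G. lra.
  - destruct (Inv t1 Ht) as [_ I2]. pose proof (Hq t1 Ht). pose proof (Hr t1 Ht). pose proof (Hrpos t1 Ht).
    split; [split; apply Hq; lra|]. rewrite I2. split; nra.
Qed.
End AP.


Section Glob.
Variable beta gamma lambda : R.
Hypothesis Hb : 0 <= beta.
Hypothesis Hg : 0 < gamma.
Hypothesis Hl : 0 < lambda.

Definition Xg := lambda + 2.
Definition Bd := 2 + gamma * (lambda + 2).
Definition rg := rho beta Bd Xg.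
Definition hg := rg / 2.

Lemma Bd_pos : 0 <= Bd.
Proof. unfold Bd. nra. Qed.

Lemma rg_pos : 0 < rg.
Proof. unfold rg. apply (rho_pos beta 0 Bd Xg Hb Bd_pos). rewrite Rabs_R0. unfold Xg; lra. Qed.

Definition datS (S : state) c := mk4 (sy S c) (sq S c) (sr S c) (sm S c).

Lemma local_at (S : state) c : 0 <= c <= lambda + 1 ->
  Rabs (sy S c) <= Bd /\ Rabs (sq S c) <= Bd /\ Rabs (sr S c) <= Bd /\ Rabs (sm S c) <= Bd ->
  solves beta (LS beta c (datS S c)) (c - rg) (c + rg) /\ agree (LS beta c (datS S c)) S c.
Proof.
  intros Hc HB. assert (HX : Rabs c <= Xg) by (unfold Xg; rewrite Rabs_right; lra).
  split.
  - apply (LS_solves beta c (datS S c) Bd Xg Hb Bd_pos HX). exact HB.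
  - pose proof (LS_init beta c (datS S c)) as I. unfold agree in *. simpl in I. exact I.
Qed.

Lemma data_bound (S : state) A T a c : A < 0 -> 0 < T -> 0 <= a <= 1 -> solves beta S A T -> agree S (cst (d0 beta gamma a)) 0 ->
  0 <= c < T -> c <= lambda + 1 ->
  Rabs (sy S c) <= Bd /\ Rabs (sq S c) <= Bd /\ Rabs (sr S c) <= Bd /\ Rabs (sm S c) <= Bd.
Proof.
  intros HA HT Ha HS H0 Hc Hc1.
  destruct (apriori beta gamma Hb Hg S A T a HA HT ltac:(lra) HS H0 c Hc) as [_ [[R1 R2] [[Y1 Y2] [[Q1 Q2] [M1 M2]]]]].
  unfold Bd. assert (gamma * a <= gamma) by nra. assert (gamma * a * c <= gamma * (lambda + 1)) by nra.
  repeat split; rewrite Rabs_right; nra.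
Qed.

Definition Tn (n : nat) := Rmin (INR (S n) * hg) (lambda + 1).

Lemma glob_ind a : 0 <= a <= 1 -> forall n, exists S A, A < 0 /\ solves beta S A (Tn n) /\ agree S (cst (d0 beta gamma a)) 0.
Proof.
  intros Ha. pose proof rg_pos as Hr. assert (Hh : 0 < hg) by (unfold hg; lra).
  induction n.
  - exists (LS beta 0 (d0 beta gamma a)), (- rg). split; [lra|]. split.
    + apply (solves_sub beta _ (0 - rg) (0 + rg)); try lra.
      * unfold Tn. simpl INR. pose proof (Rmin_l (1 * hg) (lambda + 1)). unfold hg in *. lra.
      * apply (LS_solves beta 0 (d0 beta gamma a) Bd Xg Hb Bd_pos). rewrite Rabs_R0; unfold Xg; lra.
        unfold d0, Bd; cbn [vy vq vr vm].
        assert (Hp : 1 <= 1 + beta * a) by nra.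
        assert (Q : 0 < 1 / (1 + beta * a) <= 1).
        { split. apply Rdiv_lt_0_compat; lra. unfold Rdiv. rewrite Rmult_1_l. 
          rewrite <- Rinv_1. apply Rinv_le_contravar; lra. }
        assert (Rr : 0 <= gamma * a / (1 + beta * a) <= gamma).
        { split. apply Rmult_le_pos; [nra| apply Rlt_le, Rinv_0_lt_compat; lra].
          apply (Rmult_le_reg_r (1 + beta * a)); [lra|]. unfold Rdiv.
          rewrite Rmult_assoc, Rinv_l by lra. nra. }
        repeat split; rewrite Rabs_right; nra.
    + pose proof (LS_init beta 0 (d0 beta gamma a)) as I. exact I.
  - destruct IHn as [W [A [HA [HS H0]]]].
    assert (HT0 : 0 < Tn n).
    { unfold Tn. apply Rmin_glb_lt; [|lra]. apply Rmult_lt_0_compat; auto. apply lt_0_INR; lia. }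
    destruct (Rle_dec (lambda + 1) (INR (S n) * hg)) as [Big|Small].
    + exists W, A. split; auto. split; auto.
      apply (solves_sub beta W A (Tn n)); try lra; auto.
      unfold Tn. rewrite (Rmin_right (INR (S n) * hg)) by lra.
      apply Rmin_r.
    + assert (ETn : Tn n = INR (S n) * hg) by (unfold Tn; apply Rmin_left; lra).
      set (c := Tn n - hg / 2).
      assert (Hc0 : 0 < c).
      { unfold c. rewrite ETn, S_INR. pose proof (pos_INR n). nra. }
      assert (Hc1 : c <= lambda + 1) by (unfold c; lra).
      pose proof (data_bound W A (Tn n) a c HA HT0 Ha HS H0 ltac:(split; [lra | unfold c; lra]) Hc1) as DB.
      destruct (local_at W c ltac:(lra) DB) as [L1 L2].
      exists (glue W (LS beta c (datS W c)) c), A. split; auto. split.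
      * apply (solves_sub beta _ A (c + rg)); try lra.
        -- assert (Tn (S n) <= (INR (S n) + 1) * hg) by (unfold Tn; rewrite (S_INR (S n)); apply Rmin_l).
           unfold c. rewrite ETn. unfold hg in *. nra.
        -- apply (glue_solves beta Hb W _ A (Tn n) c rg); auto.
           ++ split; [lra| unfold c, hg; lra].
           ++ unfold agree in *. destruct L2 as [? [? [? ?]]]. repeat split; auto.
      * destruct H0 as [E1 [E2 [E3 E4]]]. pose proof (glue_agree W (LS beta c (datS W c)) c 0 ltac:(lra)) as [G1 [G2 [G3 G4]]].
        unfold agree. rewrite G1, G2, G3, G4. auto.
Qed.

Lemma glob_exists a : 0 <= a <= 1 -> exists S A T, A < 0 /\ lambda < T /\ T <= lambda + 1 /\ solves beta S A T /\ agree S (cst (d0 beta gamma a)) 0.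
Proof.
  intros Ha. pose proof rg_pos as Hr. assert (Hh : 0 < hg) by (unfold hg; lra).
  destruct (archimed_cor1 (hg / (lambda + 1))) as [N [HN1 HN2]].
  { apply Rdiv_lt_0_compat; lra. }
  assert (HN : lambda + 1 < INR N * hg).
  { apply lt_INR in HN2. simpl in HN2.
    assert (H1 : / INR N * (lambda + 1) < hg).
    { apply (Rmult_lt_compat_r (lambda + 1)) in HN1; [|lra].
      unfold Rdiv in HN1. rewrite Rmult_assoc, Rinv_l in HN1 by lra. lra. }
    apply (Rmult_lt_compat_l (INR N)) in H1; [|lra].
    rewrite <- Rmult_assoc, Rinv_r, Rmult_1_l in H1 by lra. lra. }
  destruct (glob_ind a Ha N) as [S [A [HA [HS H0]]]].
  assert (ET : Tn N = lambda + 1).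
  { unfold Tn. apply Rmin_right. rewrite S_INR. nra. }
  rewrite ET in HS. exists S, A, (lambda + 1). split; [lra|split; [lra|split; [lra|split; auto]]].
Qed.
End Glob.


Lemma cont_of_sq (f : R -> R) C x : 0 <= C -> (forall y, (f y - f x) * (f y - f x) <= C * ((y - x) * (y - x))) ->
  continuity_pt f x.
Proof.
  intros HC H. unfold continuity_pt, continue_in, limit1_in, limit_in. simpl. unfold R_dist.
  intros eps Heps. exists (eps / (C + 1)). split; [apply Rdiv_lt_0_compat; lra|].
  intros y [_ Hy]. specialize (H y).
  assert (Hd : Rabs (y - x) * (C + 1) < eps).
  { apply (Rmult_lt_compat_r (C + 1)) in Hy; [|lra]. unfold Rdiv in Hy.
    rewrite Rmult_assoc, Rinv_l, Rmult_1_r in Hy by lra. exact Hy. }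
  assert (E1 : (y - x) * (y - x) = Rabs (y - x) * Rabs (y - x)) by (rewrite <- Rabs_mult, Rabs_right; [auto| apply Rle_ge; apply Rle_0_sqr]).
  assert (E2 : (f y - f x) * (f y - f x) = Rabs (f y - f x) * Rabs (f y - f x)) by (rewrite <- Rabs_mult, Rabs_right; [auto| apply Rle_ge; apply Rle_0_sqr]).
  rewrite E1, E2 in H. pose proof (Rabs_pos (y - x)). pose proof (Rabs_pos (f y - f x)).
  destruct (Rlt_dec (Rabs (f y - f x)) eps) as [ok|no]; auto. exfalso.
  assert (eps * eps <= Rabs (f y - f x) * Rabs (f y - f x)) by nra.
  set (d := Rabs (y - x)) in *. set (D := Rabs (f y - f x)) in *.
  set (u := d * (C + 1)) in *.
  assert (U0 : 0 <= u) by (unfold u; nra).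
  assert (U1 : u * u < eps * eps) by nra.
  assert (U2 : C * (u * u) <= C * (eps * eps)) by (apply Rmult_le_compat_l; lra).
  assert (U3 : eps * eps * ((C + 1) * (C + 1)) <= C * (d * d) * ((C + 1) * (C + 1))).
  { apply Rmult_le_compat_r; [nra|lra]. }
  assert (U4 : C * (d * d) * ((C + 1) * (C + 1)) = C * (u * u)) by (unfold u; ring).
  assert (U5 : 0 < eps * eps) by nra.
  nra.
Qed.

Section Shoot.
Variable beta gamma lambda : R.
Hypothesis Hb : 0 <= beta.
Hypothesis Hg : 0 < gamma.
Hypothesis Hl : 0 < lambda.

Definition clamp a := Rmax 0 (Rmin a 1).
Lemma clamp_in a : 0 <= clamp a <= 1.
Proof. unfold clamp, Rmax, Rmin. repeat destruct Rle_dec; lra. Qed.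
Lemma clamp_id a : 0 <= a <= 1 -> clamp a = a.
Proof. intros. unfold clamp, Rmax, Rmin. repeat destruct Rle_dec; lra. Qed.
Lemma clamp_lip a b : (clamp a - clamp b) * (clamp a - clamp b) <= (a - b) * (a - b).
Proof.
  assert (H : Rabs (clamp a - clamp b) <= Rabs (a - b)).
  { unfold clamp, Rmax, Rmin. repeat destruct Rle_dec; unfold Rabs; repeat destruct Rcase_abs; lra. }
  apply Rsqr_le_abs_1 in H. exact H.
Qed.

Definition GoodSol a (p : state * R * R) :=
  let '(W, A, T) := p in A < 0 /\ lambda < T /\ T <= lambda + 1 /\ solves beta W A T /\ agree W (cst (d0 beta gamma a)) 0.

Lemma good_ex a : exists p, GoodSol (clamp a) p.
Proof.
  destruct (glob_exists beta gamma lambda Hb Hg Hl (clamp a) (clamp_in a)) as [W [A [T H]]].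
  exists (W, A, T). exact H.
Qed.

Definition sol a : state * R * R := proj1_sig (constructive_indefinite_description _ (good_ex a)).
Lemma sol_good a : GoodSol (clamp a) (sol a).
Proof. unfold sol. destruct (constructive_indefinite_description _ (good_ex a)) as [p Hp]. exact Hp. Qed.

Definition Ssol a := fst (fst (sol a)).
Definition Fsh a := sy (Ssol a) lambda.

Lemma sq_div_le k u D : 1 <= D -> (k * u / D) * (k * u / D) <= (k * k) * (u * u).
Proof.
  intros HD. unfold Rdiv. 
  assert (0 < / D <= 1) by (split; [apply Rinv_0_lt_compat; lra| rewrite <- Rinv_1; apply Rinv_le_contravar; lra]).
  assert (0 <= (k * u) * (k * u)) by apply Rle_0_sqr.
  replace (k * u * / D * (k * u * / D)) with ((k * u) * (k * u) * (/ D * / D)) by ring.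
  replace (k * k * (u * u)) with ((k * u) * (k * u) * 1) by ring.
  apply Rmult_le_compat_l; auto. nra.
Qed.

Definition Mi := 1 + beta * beta + gamma * gamma + gamma * gamma * ((1 + beta * beta) * (1 + beta * beta)).

Lemma init_lip a b : 0 <= a <= 1 -> 0 <= b <= 1 ->
  dist2 (cst (d0 beta gamma a)) (cst (d0 beta gamma b)) 0 <= Mi * ((a - b) * (a - b)).
Proof.
  intros Ha Hb'. unfold dist2, cst, d0; cbn [sy sq sr sm vy vq vr vm].
  set (p := 1 + beta * a). set (p' := 1 + beta * b).
  assert (Hp : 1 <= p) by (unfold p; nra). assert (Hp' : 1 <= p') by (unfold p'; nra).
  assert (E2 : 1 / p - 1 / p' = (- beta) * (a - b) / (p * p')) by (unfold p, p'; field; repeat split; nra).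
  assert (E3 : gamma * a / p - gamma * b / p' = gamma * (a - b) / (p * p')) by (unfold p, p'; field; repeat split; nra).
  assert (E4 : 1 / p * (gamma * a / p) - 1 / p' * (gamma * b / p') = (gamma * (1 - a * b * beta * beta)) * (a - b) / (p * p * (p' * p'))).
  { unfold p, p'; field; repeat split; nra. }
  rewrite E2, E3, E4.
  pose proof (sq_div_le (- beta) (a - b) (p * p') ltac:(nra)) as Q2.
  pose proof (sq_div_le gamma (a - b) (p * p') ltac:(nra)) as Q3.
  assert (Hpp : 1 <= p * p * (p' * p')) by (assert (1 <= p * p) by nra; assert (1 <= p' * p') by nra; nra).
  pose proof (sq_div_le (gamma * (1 - a * b * beta * beta)) (a - b) _ Hpp) as Q4.
  assert (K4 : (gamma * (1 - a * b * beta * beta)) * (gamma * (1 - a * b * beta * beta)) <= gamma * gamma * ((1 + beta * beta) * (1 + beta * beta))).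
  { assert (0 <= a * b <= 1) by nra. assert (0 <= beta * beta) by nra.
    assert (Rabs (1 - a * b * beta * beta) <= 1 + beta * beta).
    { unfold Rabs; destruct Rcase_abs; nra. }
    assert ((1 - a * b * beta * beta) * (1 - a * b * beta * beta) <= (1 + beta * beta) * (1 + beta * beta)).
    { apply Rsqr_le_abs_1. rewrite (Rabs_right (1 + beta * beta)) by lra. auto. }
    replace ((gamma * (1 - a * b * beta * beta)) * (gamma * (1 - a * b * beta * beta))) with
      (gamma * gamma * ((1 - a * b * beta * beta) * (1 - a * b * beta * beta))) by ring.
    apply Rmult_le_compat_l; [nra| auto]. }
  assert (0 <= (a - b) * (a - b)) by apply Rle_0_sqr.
  assert (Q4' : (gamma * (1 - a * b * beta * beta)) * (gamma * (1 - a * b * beta * beta)) * ((a - b) * (a - b))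
     <= gamma * gamma * ((1 + beta * beta) * (1 + beta * beta)) * ((a - b) * (a - b))) by (apply Rmult_le_compat_r; auto).
  unfold Mi. nra.
Qed.

Definition Bsh := Bd gamma lambda + lambda.

Lemma sol_facts a : let S := Ssol a in exists A T, A < 0 /\ lambda < T /\ T <= lambda + 1 /\ solves beta S A T /\ agree S (cst (d0 beta gamma (clamp a))) 0.
Proof.
  pose proof (sol_good a) as G. unfold Ssol. destruct (sol a) as [[W A] T]. simpl. exists A, T. exact G.
Qed.

Lemma sol_on a : solves beta (Ssol a) 0 lambda /\ ccont (Ssol a) 0 lambda /\ bnd (Ssol a) 0 lambda Bsh.
Proof.
  destruct (sol_facts a) as [A [T [HA [HT [HT1 [HS H0]]]]]].
  split; [apply (solves_sub beta _ A T); auto; lra|].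
  split; [apply (solves_ccont beta _ A T); auto; lra|].
  intros t Ht. pose proof (clamp_in a).
  destruct (data_bound beta gamma lambda Hb Hg (Ssol a) A T (clamp a) t HA ltac:(lra) ltac:(lra) HS H0 ltac:(lra) ltac:(lra)) as [? [? [? ?]]].
  unfold Bsh. repeat split; lra.
Qed.

Lemma Fsh_lip a b : (Fsh a - Fsh b) * (Fsh a - Fsh b) <= (Mi * exp (Kc beta Bsh * lambda)) * ((a - b) * (a - b)).
Proof.
  destruct (sol_on a) as [S1 [C1 B1]]. destruct (sol_on b) as [S2 [C2 B2]].
  assert (HB : 0 <= Bsh) by (unfold Bsh; pose proof (Bd_pos gamma lambda Hg Hl); lra).
  destruct (dep beta Hb (Ssol a) (Ssol b) 0 lambda Bsh ltac:(lra) HB S1 S2 C1 C2 B1 B2) with (t := lambda) as [D _]; [| lra |].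
  { intros t Ht. unfold Bsh. pose proof (Bd_pos gamma lambda Hg Hl). rewrite Rabs_right; lra. }
  destruct (sol_facts a) as [A [T [_ [_ [_ [_ H0a]]]]]]. destruct (sol_facts b) as [A' [T' [_ [_ [_ [_ H0b]]]]]].
  assert (E : dist2 (Ssol a) (Ssol b) 0 = dist2 (cst (d0 beta gamma (clamp a))) (cst (d0 beta gamma (clamp b))) 0).
  { destruct H0a as [a1 [a2 [a3 a4]]]. destruct H0b as [b1 [b2 [b3 b4]]]. unfold dist2. rewrite a1, a2, a3, a4, b1, b2, b3, b4. reflexivity. }
  rewrite E in D. replace (lambda - 0) with lambda in D by ring.
  pose proof (init_lip (clamp a) (clamp b) (clamp_in a) (clamp_in b)) as I.
  pose proof (clamp_lip a b) as CL.
  assert (Hexp : 0 < exp (Kc beta Bsh * lambda)) by apply exp_pos.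
  assert (HMi : 0 <= Mi) by (unfold Mi; nra).
  assert (Hd : (Fsh a - Fsh b) * (Fsh a - Fsh b) <= dist2 (Ssol a) (Ssol b) lambda).
  { unfold Fsh, dist2. pose proof (Rle_0_sqr (sq (Ssol a) lambda - sq (Ssol b) lambda)).
    pose proof (Rle_0_sqr (sr (Ssol a) lambda - sr (Ssol b) lambda)).
    pose proof (Rle_0_sqr (sm (Ssol a) lambda - sm (Ssol b) lambda)). unfold Rsqr in *. lra. }
  assert (I2 : dist2 (cst (d0 beta gamma (clamp a))) (cst (d0 beta gamma (clamp b))) 0 <= Mi * ((a - b) * (a - b))).
  { eapply Rle_trans; [exact I|]. apply Rmult_le_compat_l; auto. }
  assert (I3 : dist2 (cst (d0 beta gamma (clamp a))) (cst (d0 beta gamma (clamp b))) 0 * exp (Kc beta Bsh * lambda)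
       <= Mi * ((a - b) * (a - b)) * exp (Kc beta Bsh * lambda)) by (apply Rmult_le_compat_r; lra).
  nra.
Qed.

Lemma shoot : exists a, 0 <= a <= 1 /\ Fsh a = 1.
Proof.
  assert (Hc : forall x, continuity_pt (fun a => Fsh a - 1) x).
  { intros x. apply (cont_of_sq _ (Mi * exp (Kc beta Bsh * lambda))).
    - apply Rmult_le_pos; [unfold Mi; nra| apply Rlt_le, exp_pos].
    - intros y. replace (Fsh y - 1 - (Fsh x - 1)) with (Fsh y - Fsh x) by ring. apply Fsh_lip. }
  assert (F0 : Fsh 0 = 0).
  { destruct (sol_facts 0) as [A [T [HA [HT [HT1 [HS H0]]]]]].
    rewrite clamp_id in H0 by lra.
    destruct (apriori beta gamma Hb Hg (Ssol 0) A T 0 HA ltac:(lra) ltac:(lra) HS H0 lambda ltac:(lra)) as [_ [_ [[Y1 Y2] _]]].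
    unfold Fsh. nra. }
  assert (F1 : 1 <= Fsh 1).
  { destruct (sol_facts 1) as [A [T [HA [HT [HT1 [HS H0]]]]]].
    rewrite clamp_id in H0 by lra.
    destruct (apriori beta gamma Hb Hg (Ssol 1) A T 1 HA ltac:(lra) ltac:(lra) HS H0 lambda ltac:(lra)) as [_ [_ [[Y1 Y2] _]]].
    unfold Fsh. lra. }
  destruct (Req_dec (Fsh 1) 1) as [E|NE].
  - exists 1. split; [lra| auto].
  - destruct (Ranalysis5.IVT_interv (fun a => Fsh a - 1) 0 1) as [z [Hz1 Hz2]]; try lra.
    + intros; apply Hc.
    + exists z. split; auto. lra.
Qed.
End Shoot.


Lemma sum_ge_term (u : nat -> R) N n : (forall k, 0 <= u k) -> (n <= N)%nat -> u n <= sum_f_R0 u N.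
Proof.
  intros Hu Hn. induction N.
  - assert (n = 0%nat) by lia. subst. simpl. lra.
  - simpl. destruct (Nat.eq_dec n (S N)) as [->|Hne]; [pose proof (cond_pos_sum u N ltac:(intros; auto)); lra|].
    assert (n <= N)%nat by lia. specialize (IHN H). pose proof (Hu (S N)). lra.
Qed.

Lemma lim0_bounded (u : nat -> R) : is_lim_seq u 0 -> exists M, forall n, Rabs (u n) <= M.
Proof.
  intros H. apply is_lim_seq_spec in H. destruct (H (mkposreal 1 Rlt_0_1)) as [N HN]. simpl in HN.
  exists (1 + sum_f_R0 (fun k => Rabs (u k)) N). intros n.
  assert (0 <= sum_f_R0 (fun k => Rabs (u k)) N) by (apply cond_pos_sum; intros; apply Rabs_pos).
  destruct (le_lt_dec N n) as [Hn|Hn].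
  - specialize (HN n Hn). rewrite Rminus_0_r in HN. lra.
  - pose proof (sum_ge_term (fun k => Rabs (u k)) N n (fun k => Rabs_pos _) ltac:(lia)). simpl in H1. lra.
Qed.

Lemma rad_of_ps (c : nat -> R) r s : (forall s', Rabs s' < r -> ex_pseries c s') -> Rabs s < r ->
  Rbar_lt (Rabs s) (CV_radius c).
Proof.
  intros H Hs. set (s' := (Rabs s + r) / 2).
  assert (Hs' : Rabs s < s' < r) by (unfold s'; lra).
  assert (Hs0 : 0 <= s') by (pose proof (Rabs_pos s); lra).
  specialize (H s' ltac:(rewrite Rabs_right; lra)).
  apply ex_series_lim_0 in H. apply lim0_bounded in H. destruct H as [M HM].
  assert (Hle : Rbar_le s' (CV_radius c)).
  { destruct (CV_radius_bounded c) as [Hub _]. apply Hub. exists M. intros n.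
    specialize (HM n). rewrite Rmult_comm. unfold scal in HM; simpl in HM. unfold mult in HM; simpl in HM.
    rewrite pow_n_pow in HM. exact HM. }
  destruct (CV_radius c) as [x| |]; simpl in *; auto; lra.
Qed.

Lemma an_local (z : R -> R) (x r : R) (c : nat -> R) : 0 < r -> (forall t, Rabs (t - x) < r -> is_pseries c (t - x) (z t)) ->
  forall t, Rabs (t - x) < r ->
    is_derive z t (PSeries (PS_derive c) (t - x)) /\ Derive z t = PSeries (PS_derive c) (t - x) /\
    is_derive (Derive z) t (PSeries (PS_derive (PS_derive c)) (t - x)).
Proof.
  intros Hr H t Ht.
  assert (Hrad : forall s, Rabs s < r -> Rbar_lt (Rabs s) (CV_radius c)).
  { intros s Hs. apply (rad_of_ps c r); auto. intros s' Hs'. specialize (H (s' + x) ltac:(replace (s' + x - x) with s' by ring; auto)).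
    replace (s' + x - x) with s' in H by ring. eexists; eauto. }
  assert (Hloc : forall t, Rabs (t - x) < r -> locally t (fun u => PSeries c (u - x) = z u)).
  { intros t0 Ht0. apply (loc_of t0 _ (r - Rabs (t0 - x))); [lra|]. intros u Hu.
    apply is_pseries_unique. apply H.
    pose proof (Rabs_triang (u - t0) (t0 - x)). replace (u - t0 + (t0 - x)) with (u - x) in H0 by ring. lra. }
  assert (D1 : forall t, Rabs (t - x) < r -> is_derive z t (PSeries (PS_derive c) (t - x))).
  { intros t0 Ht0. eapply is_derive_ext_loc; [apply Hloc; auto|]. apply dshift. apply Hrad; auto. }
  assert (D2 : forall t, Rabs (t - x) < r -> Derive z t = PSeries (PS_derive c) (t - x)).
  { intros t0 Ht0. apply is_derive_unique, D1; auto. }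
  split; [apply D1; auto|]. split; [apply D2; auto|].
  eapply is_derive_ext_loc.
  - apply (loc_of t _ (r - Rabs (t - x))); [lra|]. intros u Hu. symmetry. apply D2.
    pose proof (Rabs_triang (u - t) (t - x)). replace (u - t + (t - x)) with (u - x) in H0 by ring. lra.
  - apply dshift. rewrite CV_radius_derive. apply Hrad; auto.
Qed.


Lemma an_deriv (z : R -> R) a b : analytic_on z a b -> forall x, a <= x <= b ->
  is_derive z x (Derive z x) /\ is_derive (Derive z) x (Derive (Derive z) x).
Proof.
  intros H x Hx. destruct (H x Hx) as [r [Hr [c Hc]]].
  destruct (an_local z x r c Hr Hc x) as [D1 [D2 D3]]; [rewrite Rminus_eq_0, Rabs_R0; lra|].
  split; [rewrite (is_derive_unique _ _ _ D1); auto|]. rewrite (is_derive_unique _ _ _ D3); auto.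
Qed.

Section Conv.
Variable lambda beta gamma : R.
Hypothesis Hb : 0 <= beta.
Hypothesis Hl : 0 < lambda.

Definition Zs (z : R -> R) := St z (fun t => 1 / (1 + beta * z t)) (Derive z) (fun t => 1 / (1 + beta * z t) * Derive z t).

Lemma dinv1 (f : R -> R) x l : is_derive f x l -> f x <> 0 -> is_derive (fun y => 1 / f y) x (- l / (f x * f x)).
Proof.
  intros H Hf. eapply dext; [| eapply dval; [| apply (is_derive_inv f x l H Hf)]].
  - intros; cbv beta; unfold Rdiv; ring.
  - simpl. field. auto.
Qed.

Lemma conv_sol z : nonneg_analytic_solution lambda beta gamma z ->
  solves beta (Zs z) 0 lambda /\ ccont (Zs z) 0 lambda /\ agree (Zs z) (cst (d0 beta gamma (z 0))) 0.
Proof.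
  intros [HA [Hnn [Hode [Hbc Hend]]]].
  assert (Hpos : forall t, 0 <= t <= lambda -> 0 < 1 + beta * z t) by (intros t Ht; pose proof (Hnn t Ht); nra).
  assert (Dq : forall t, 0 <= t <= lambda -> is_derive (fun t => 1 / (1 + beta * z t)) t
            (- (beta * Derive z t) / ((1 + beta * z t) * (1 + beta * z t)))).
  { intros t Ht. destruct (an_deriv z 0 lambda HA t Ht) as [D1 _].
    apply (dinv1 (fun t => 1 + beta * z t)).
    - eapply dval; [| apply dplus; [apply dconst| apply dscal, D1]]. ring.
    - pose proof (Hpos t Ht). lra. }
  assert (Dm : forall t, 0 <= t <= lambda -> is_derive (fun t => 1 / (1 + beta * z t) * Derive z t) t
            (- (beta * Derive z t) / ((1 + beta * z t) * (1 + beta * z t)) * Derive z t + 1 / (1 + beta * z t) * Derive (Derive z) t)).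
  { intros t Ht. destruct (an_deriv z 0 lambda HA t Ht) as [_ D2].
    eapply dval; [| apply (dmult (fun t => 1 / (1 + beta * z t)) (Derive z)); [apply Dq; auto| apply D2]]. cbv beta. ring. }
  split; [|split].
  - intros t Ht. assert (Ht' : 0 <= t <= lambda) by lra.
    destruct (an_deriv z 0 lambda HA t Ht') as [D1 D2].
    pose proof (Hpos t Ht') as P.
    assert (Hpr : is_derive (fun e => (1 + beta * z e) * Derive z e) t (beta * Derive z t * Derive z t + (1 + beta * z t) * Derive (Derive z) t)).
    { eapply dval; [| apply (dmult (fun e => 1 + beta * z e) (Derive z)); [apply dplus; [apply dconst| apply dscal, D1] | apply D2]]. cbv beta. ring. }
    assert (E2 : Derive (fun e : R => (1 + beta * z e) * Derive z e) t = beta * Derive z t * Derive z t + (1 + beta * z t) * Derive (Derive z) t)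
      by (apply is_derive_unique; exact Hpr).
    pose proof (Hode t Ht) as E. rewrite E2 in E.
    assert (Ez : Derive (Derive z) t = (- 2 * t * Derive z t - beta * Derive z t * Derive z t) / (1 + beta * z t)).
    { assert (Hu : (1 + beta * z t) * Derive (Derive z) t = - 2 * t * Derive z t - beta * Derive z t * Derive z t) by lra.
      rewrite <- Hu. field. lra. }
    unfold Zs; cbn [sy sq sr sm]. split; [|split; [|split]].
    + exact D1.
    + eapply dval; [| apply Dq; auto]. field. lra.
    + eapply dval; [| apply D2]. rewrite Ez. field. lra.
    + eapply dval; [| apply Dm; auto]. rewrite Ez. field. lra.
  - intros t Ht. destruct (an_deriv z 0 lambda HA t Ht) as [D1 D2]. unfold Zs; cbn [sy sq sr sm].
    split; [|split; [|split]]; apply cont_of_deriv.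
    + eexists; exact D1.
    + eexists; apply Dq; auto.
    + eexists; exact D2.
    + eexists; apply Dm; auto.
  - pose proof (Hpos 0 ltac:(lra)) as P.
    assert (Er : Derive z 0 = gamma * z 0 / (1 + beta * z 0)).
    { assert (Hu : gamma * z 0 = (1 + beta * z 0) * Derive z 0) by lra. rewrite Hu. field. lra. }
    unfold agree, Zs, cst, d0; cbn [sy sq sr sm vy vq vr vm]. rewrite Er. repeat split; reflexivity.
Qed.
End Conv.


Lemma cont_eps (f : R -> R) x eps : continuity_pt f x -> 0 < eps ->
  exists del, 0 < del /\ forall y, Rabs (y - x) < del -> Rabs (f y - f x) < eps.
Proof.
  intros H He. unfold continuity_pt, continue_in, limit1_in, limit_in in H. simpl in H.
  destruct (H eps He) as [del [Hd Hy]]. exists del. split; auto. intros y Hy'.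
  destruct (Req_dec y x) as [->|Hne].
  - rewrite Rminus_eq_0, Rabs_R0. auto.
  - apply Hy. split; [unfold D_x, no_cond; auto| exact Hy'].
Qed.

Section Comp.
Variable lambda beta gamma : R.
Hypothesis Hb : 0 <= beta.
Hypothesis Hg : 0 < gamma.
Hypothesis Hl : 0 < lambda.

Lemma flux_deriv z : nonneg_analytic_solution lambda beta gamma z ->
  (forall t, 0 <= t <= lambda -> ex_derive (fun e => (1 + beta * z e) * Derive z e) t) /\
  (forall t, 0 < t < lambda -> is_derive (fun e => (1 + beta * z e) * Derive z e) t (- 2 * t * Derive z t)).
Proof.
  intros [HA [Hnn [Hode _]]].
  assert (Hpr : forall t, 0 <= t <= lambda -> is_derive (fun e => (1 + beta * z e) * Derive z e) t
      (beta * Derive z t * Derive z t + (1 + beta * z t) * Derive (Derive z) t)).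
  { intros t Ht. destruct (an_deriv z 0 lambda HA t Ht) as [D1 D2].
    eapply dval; [| apply (dmult (fun e => 1 + beta * z e) (Derive z)); [apply dplus; [apply dconst| apply dscal, D1] | apply D2]]. cbv beta. ring. }
  split.
  - intros t Ht. eexists. apply Hpr; auto.
  - intros t Ht. eapply dval; [| apply Hpr; lra].
    assert (E2 : Derive (fun e : R => (1 + beta * z e) * Derive z e) t = beta * Derive z t * Derive z t + (1 + beta * z t) * Derive (Derive z) t)
      by (apply is_derive_unique; apply Hpr; lra).
    pose proof (Hode t Ht) as E. rewrite E2 in E. lra.
Qed.

Lemma comp_lt z1 z2 : nonneg_analytic_solution lambda beta gamma z1 -> nonneg_analytic_solution lambda beta gamma z2 ->
  z1 0 < z2 0 -> False.
Proof.
  intros S1 S2 Hlt.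
  destruct (flux_deriv z1 S1) as [W1c W1d]. destruct (flux_deriv z2 S2) as [W2c W2d].
  destruct S1 as [HA1 [Hnn1 [Hode1 [Hbc1 Hend1]]]]. destruct S2 as [HA2 [Hnn2 [Hode2 [Hbc2 Hend2]]]].
  set (d := fun t => z1 t - z2 t).
  assert (Dd : forall t, 0 <= t <= lambda -> is_derive d t (Derive z1 t - Derive z2 t)).
  { intros t Ht. apply dminus; apply (an_deriv _ 0 lambda); auto. }
  assert (Cd : forall t, 0 <= t <= lambda -> continuity_pt d t).
  { intros t Ht. apply cont_of_deriv. eexists. apply Dd; auto. }
  set (E := fun s => 0 <= s <= lambda /\ forall u, 0 <= u <= s -> d u < 0).
  assert (Hd0 : d 0 < 0) by (unfold d; lra).
  assert (Hdl : d lambda = 0) by (unfold d; lra).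
  destruct (completeness E) as [eta [Hub Hlub]].
  { exists lambda. intros s [Hs _]. lra. }
  { exists 0. split; [lra|]. intros u Hu. replace u with 0 by lra. auto. }
  assert (He0 : 0 <= eta) by (apply Hub; split; [lra|]; intros u Hu; replace u with 0 by lra; auto).
  assert (Hel : eta <= lambda) by (apply Hlub; intros s [Hs _]; lra).
  assert (Hbelow : forall u, 0 <= u < eta -> d u < 0).
  { intros u Hu. destruct (Rle_dec 0 (d u)) as [Hge|Hlt']; [|lra]. exfalso.
    assert (Hubu : is_upper_bound E u).
    { intros s [Hs Hall]. destruct (Rle_dec s u) as [ok|no]; [auto|]. specialize (Hall u ltac:(lra)). lra. }
    specialize (Hlub u Hubu). lra. }
  assert (Hepos : 0 < eta).
  { destruct (cont_eps d 0 (- d 0 / 2) (Cd 0 ltac:(lra)) ltac:(lra)) as [del [Hdel Hc]].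
    set (s := Rmin (del / 2) lambda).
    assert (Hs : 0 < s) by (unfold s; apply Rmin_glb_lt; lra).
    assert (E s).
    { split; [split; [lra| unfold s; apply Rmin_r]|]. intros u Hu.
      assert (u <= del / 2) by (pose proof (Rmin_l (del / 2) lambda); unfold s in Hu; lra).
      specialize (Hc u ltac:(rewrite Rminus_0_r, Rabs_right; lra)). apply Rabs_def2 in Hc. lra. }
    pose proof (Hub s H). lra. }
  assert (Hdeta : d eta = 0).
  { destruct (Rtotal_order (d eta) 0) as [Hn|[Hz|Hp]]; auto; exfalso.
    - destruct (Req_dec eta lambda) as [Heq|Hne]; [rewrite Heq in Hn; lra|].
      destruct (cont_eps d eta (- d eta / 2) (Cd eta ltac:(lra)) ltac:(lra)) as [del [Hdel Hc]].
      set (s := Rmin (eta + del / 2) lambda).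
      assert (Hs : eta < s) by (unfold s; apply Rmin_glb_lt; lra).
      assert (E s).
      { split; [split; [lra| unfold s; apply Rmin_r]|]. intros u Hu.
        destruct (Rlt_dec u eta) as [Hlt'|Hge]; [apply Hbelow; lra|].
        assert (u <= eta + del / 2) by (pose proof (Rmin_l (eta + del / 2) lambda); unfold s in Hu; lra).
        specialize (Hc u ltac:(rewrite Rabs_right; lra)). apply Rabs_def2 in Hc. lra. }
      pose proof (Hub s H). lra.
    - destruct (cont_eps d eta (d eta / 2) (Cd eta ltac:(lra)) ltac:(lra)) as [del [Hdel Hc]].
      set (u := Rmax 0 (eta - del / 2)).
      assert (Hu : 0 <= u < eta) by (unfold u, Rmax; destruct Rle_dec; lra).
      specialize (Hc u ltac:(unfold u, Rmax; destruct Rle_dec; rewrite Rabs_left; lra)).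
      apply Rabs_def2 in Hc. pose proof (Hbelow u Hu). lra. }
  set (w1 := fun e => (1 + beta * z1 e) * Derive z1 e). set (w2 := fun e => (1 + beta * z2 e) * Derive z2 e).
  set (Hf := fun t => w2 t - w1 t - 2 * t * d t).
  assert (HH : Hf 0 <= Hf eta).
  { apply (nondecr_open Hf (fun t => - 2 * d t) 0 eta); try lra.
    - intros t Ht. unfold Hf. eapply dval; [| apply dminus; [apply dminus; [apply W2d; lra| apply W1d; lra] |
        apply (dmult (fun t => 2 * t) d); [apply dscal, did| apply Dd; lra]]].
      unfold d. ring.
    - intros t Ht. pose proof (Hbelow t ltac:(lra)). lra.
    - intros t Ht. unfold Hf. apply cminus; [apply cminus|].
      + apply cont_of_deriv, W2c; lra.
      + apply cont_of_deriv, W1c; lra.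
      + apply cmult; [apply continuity_pt_scal, continuity_pt_id| apply Cd; lra]. }
  assert (H0v : Hf 0 = gamma * (z2 0 - z1 0)).
  { unfold Hf, w1, w2, d. lra. }
  assert (Hev : Hf eta = (1 + beta * z1 eta) * (Derive z2 eta - Derive z1 eta)).
  { unfold Hf, w1, w2. rewrite Hdeta. unfold d in Hdeta. replace (z2 eta) with (z1 eta) by lra. ring. }
  assert (Hpz : 0 < 1 + beta * z1 eta) by (pose proof (Hnn1 eta ltac:(lra)); nra).
  assert (Hdd : Derive z1 eta - Derive z2 eta < 0).
  { assert (0 < (1 + beta * z1 eta) * (Derive z2 eta - Derive z1 eta)) by nra.
    assert (0 < Derive z2 eta - Derive z1 eta).
    { destruct (Rlt_dec 0 (Derive z2 eta - Derive z1 eta)); auto. nra. }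
    lra. }
  set (L := Derive z1 eta - Derive z2 eta).
  pose proof (Dd eta ltac:(lra)) as DL. apply is_derive_Reals in DL.
  destruct (DL (- L / 2) ltac:(unfold L; lra)) as [del Hdel].
  set (h := - Rmin (del / 2) (eta / 2)).
  assert (Hh : - (eta / 2) <= h < 0).
  { unfold h. pose proof (Rmin_r (del / 2) (eta / 2)). assert (0 < Rmin (del / 2) (eta / 2)) by (apply Rmin_glb_lt; [destruct del; simpl; lra| lra]). lra. }
  assert (Hhd : Rabs h < del).
  { rewrite Rabs_left by lra. unfold h. pose proof (Rmin_l (del / 2) (eta / 2)). destruct del; simpl in *; lra. }
  specialize (Hdel h ltac:(lra) Hhd). rewrite Hdeta, Rminus_0_r in Hdel.
  apply Rabs_def2 in Hdel. destruct Hdel as [Hq _].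
  assert (Hneg : d (eta + h) < 0) by (apply Hbelow; lra).
  assert (d (eta + h) / h > 0).
  { unfold Rdiv. assert (/ h < 0) by (apply Rinv_lt_0_compat; lra). nra. }
  unfold L in *. lra.
Qed.
End Comp.


Lemma uniq_sol lambda beta gamma (Hb : 0 <= beta) (Hg : 0 < gamma) (Hl : 0 < lambda) z1 z2 :
  nonneg_analytic_solution lambda beta gamma z1 -> nonneg_analytic_solution lambda beta gamma z2 ->
  forall eta, 0 <= eta <= lambda -> z1 eta = z2 eta.
Proof.
  intros S1 S2 eta Heta.
  destruct (Rtotal_order (z1 0) (z2 0)) as [Hlt|[Heq|Hgt]].
  - exfalso. apply (comp_lt lambda beta gamma Hb Hg Hl z1 z2); auto.
  - destruct (conv_sol lambda beta gamma Hb Hl z1 S1) as [A1 [B1 C1]].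
    destruct (conv_sol lambda beta gamma Hb Hl z2 S2) as [A2 [B2 C2]].
    rewrite Heq in C1.
    assert (Ag : agree (Zs beta z1) (Zs beta z2) 0).
    { destruct C1 as [a1 [a2 [a3 a4]]]. destruct C2 as [b1 [b2 [b3 b4]]].
      unfold agree. rewrite a1, a2, a3, a4, b1, b2, b3, b4. auto. }
    destruct (uniq beta Hb (Zs beta z1) (Zs beta z2) 0 lambda 0 ltac:(lra) A1 A2 B1 B2 Ag eta Heta) as [E _].
    exact E.
  - exfalso. apply (comp_lt lambda beta gamma Hb Hg Hl z2 z1); auto.
Qed.

Lemma existence lambda beta gamma (Hb : 0 <= beta) (Hg : 0 < gamma) (Hl : 0 < lambda) :
  exists y, nonneg_analytic_solution lambda beta gamma y.
Proof.
  destruct (shoot beta gamma lambda Hb Hg Hl) as [a [Ha Fa]].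
  pose proof (sol_facts beta gamma lambda Hb Hg Hl a) as SF. simpl in SF.
  set (S := Ssol beta gamma lambda Hb Hg Hl a) in *.
  destruct SF as [A [T [HA [HT [HT1 [HS H0]]]]]].
  rewrite clamp_id in H0 by lra.
  exists (sy S).
  assert (AP := apriori beta gamma Hb Hg S A T a HA ltac:(lra) ltac:(lra) HS H0).
  split; [|split; [|split; [|split]]].
  -
    intros x Hx.
    pose proof (data_bound beta gamma lambda Hb Hg S A T a x HA ltac:(lra) Ha HS H0 ltac:(lra) ltac:(lra)) as DB.
    destruct (local_at beta gamma lambda Hb Hg Hl S x ltac:(lra) DB) as [L1 L2].
    pose proof (rg_pos beta gamma lambda Hb Hg Hl) as Hr.
    set (del := Rmin (rg beta gamma lambda) (Rmin (x - A) (T - x)) / 2).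
    assert (Hdel : 0 < del /\ del < rg beta gamma lambda /\ del < x - A /\ del < T - x).
    { unfold del. pose proof (Rmin_l (rg beta gamma lambda) (Rmin (x - A) (T - x))).
      pose proof (Rmin_r (rg beta gamma lambda) (Rmin (x - A) (T - x))).
      pose proof (Rmin_l (x - A) (T - x)). pose proof (Rmin_r (x - A) (T - x)).
      assert (0 < Rmin (rg beta gamma lambda) (Rmin (x - A) (T - x))) by (repeat apply Rmin_glb_lt; lra).
      lra. }
    exists del. split; [lra|]. exists (cy beta x (datS S x)).
    intros t Ht. apply Rabs_def2 in Ht.
    assert (U : agree (LS beta x (datS S x)) S t).
    { apply (uniq beta Hb _ S (x - del) (x + del) x); try lra.
      - apply (solves_sub beta _ (x - rg beta gamma lambda) (x + rg beta gamma lambda)); auto; lra.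
      - apply (solves_sub beta _ A T); auto; lra.
      - apply (solves_ccont beta _ (x - rg beta gamma lambda) (x + rg beta gamma lambda)); auto; lra.
      - apply (solves_ccont beta _ A T); auto; lra.
      - auto. }
    destruct U as [U1 _]. rewrite <- U1.
    apply (LS_pseries beta x (datS S x) (Bd gamma lambda) (Xg lambda) Hb (Bd_pos gamma lambda Hg Hl)).
    + unfold Xg. rewrite Rabs_right; lra.
    + exact DB.
    + apply Rabs_def1; unfold rg in Hdel; lra.
  -
    intros eta Heta. destruct (AP eta ltac:(lra)) as [_ [_ [[Y1 _] _]]]. lra.
  -
    intros eta Heta.
    assert (Dy : forall e, A < e < T -> Derive (sy S) e = sr S e).
    { intros e He. apply is_derive_unique. apply (HS e He). }
    assert (Hloc : locally eta (fun e => (1 + beta * sy S e) * sr S e = (1 + beta * sy S e) * Derive (sy S) e)).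
    { apply (loc_of eta _ (Rmin (eta - A) (T - eta))).
      - apply Rmin_glb_lt; lra.
      - intros e He. apply Rabs_def2 in He. pose proof (Rmin_l (eta - A) (T - eta)). pose proof (Rmin_r (eta - A) (T - eta)).
        rewrite Dy; [reflexivity| lra]. }
    destruct (HS eta ltac:(lra)) as [DY [_ [DR _]]].
    assert (Hd : is_derive (fun e => (1 + beta * sy S e) * Derive (sy S) e) eta
        (beta * sr S eta * sr S eta + (1 + beta * sy S eta) * (- beta * sm S eta * sr S eta - 2 * eta * sm S eta))).
    { eapply is_derive_ext_loc; [exact Hloc|].
      eapply dval; [| apply (dmult (fun e => 1 + beta * sy S e) (sr S)); [apply dplus; [apply dconst| apply dscal, DY]| apply DR]].
      cbv beta. ring. }
    assert (E2 : Derive (fun e : R => (1 + beta * sy S e) * Derive (sy S) e) eta =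
        beta * sr S eta * sr S eta + (1 + beta * sy S eta) * (- beta * sm S eta * sr S eta - 2 * eta * sm S eta))
      by (apply is_derive_unique; exact Hd).
    rewrite E2, (Dy eta ltac:(lra)).
    destruct (AP eta ltac:(lra)) as [[I1 I2] _].
    rewrite I2.
    replace (beta * sr S eta * sr S eta + (1 + beta * sy S eta) * (- beta * (sq S eta * sr S eta) * sr S eta - 2 * eta * (sq S eta * sr S eta)) + 2 * eta * sr S eta)
      with (beta * sr S eta * sr S eta - (sq S eta * (1 + beta * sy S eta)) * (beta * sr S eta * sr S eta + 2 * eta * sr S eta) + 2 * eta * sr S eta) by ring.
    rewrite I1. ring.
  -
    rewrite (is_derive_unique _ _ _ (proj1 (HS 0 ltac:(lra)))).
    destruct H0 as [E1 [_ [E3 _]]]. rewrite E1, E3. unfold cst, d0; cbn [sy sq sr sm vy vq vr vm].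
    assert (0 < 1 + beta * a) by nra. field. lra.
  -
    exact Fa.
Qed.


Theorem theorem3p7 (lambda gamma beta1 beta : R)
  (Hlambda : 0 < lambda) (Hgamma : 0 < gamma)
  (Hbeta1pos : 0 < beta1)
  (Hbeta1 : sqrt PI / 2 * gamma * beta1 * sqrt (1 + beta1) * (3 + beta1) = 1)
  (Hbeta : 0 <= beta < beta1) :
  exists y : R -> R,
    nonneg_analytic_solution lambda beta gamma y /\
    forall z : R -> R, nonneg_analytic_solution lambda beta gamma z ->
      forall eta, 0 <= eta <= lambda -> z eta = y eta.
Proof.
  assert (Hb : 0 <= beta) by lra.
  destruct (existence lambda beta gamma Hb Hgamma Hlambda) as [y Hy].
  exists y. split; [exact Hy|].
  intros z Hz eta Heta. apply (uniq_sol lambda beta gamma Hb Hgamma Hlambda z y Hz Hy eta Heta).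
Qed.
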